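(* Let $\Sigma\subseteq\mathcal L$ be finite and closed under subformulas, let $\mathcal Q$ be a $\Sigma$-quasimodel, and suppose $\varphi\in\Sigma$ is falsified on $\mathcal Q$ (i.e. $\varphi\notin\ell(w)$ for some world $w$ of $\mathcal Q$). Then there is a bi-relational model (with $T=\mathbb Z$ and $S$ the successor function) that falsifies $\varphi$.
   Context: Language $\mathcal L$: formulas over a countably infinite set $\mathbb P$ of variables built with $\wedge,\vee,\Rightarrow,\Leftarrow$ (co-implication), unary $\mathsf X,\mathsf Y,\mathsf G,\mathsf H$ and binary $\mathsf U,\mathsf S$. Bi-relational model: $(W,T,\le,S,[\![\cdot]\!])$ with $(W,\le)$ a linear order, $S$ a bijection of $T$, and $[\![\cdot]\!]\colon\mathcal L\to2^{W\times T}$ with $[\![p]\!]$ downward closed in the first coordinate, Boolean clauses for $\wedge,\vee$, $(w,t)\in[\![\varphi\Rightarrow\psi]\!]$ iff $\forall v\le w\,((v,t)\in[\![\varphi]\!]\Rightarrow(v,t)\in[\![\psi]\!])$, $(w,t)\in[\![\varphi\Leftarrow\psi]\!]$ iff $\exists v\ge w\,((v,t)\in[\![\varphi]\!]\setminus[\![\psi]\!])$, and the usual linear-time clauses along $S$: $\mathsf X$ next, $\mathsf Y$ previous, $\mathsf G$ all $S^n(t)$, $n\ge0$, $\mathsf H$ all $S^{-n}(t)$, $n\ge 0$, $\varphi\,\mathsf U\,\psi$: some $n\ge0$ with $\psi$ at $S^n(t)$ and $\varphi$ at $S^i(t)$, $i<n$; $\mathsf S$ dually. It falsifies $\varphi$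 if $[\![\varphi]\!]\neq W\times T$. Let $\Sigma\subseteq\mathcal L$ be closed under subformulas. A $\Sigma$-type is $\Phi\subseteq\Sigma$ such that: for $\varphi\wedge\psi\in\Sigma$, $\varphi\wedge\psi\in\Phi$ iff $\varphi,\psi\in\Phi$; for $\varphi\vee\psi\in\Sigma$, $\varphi\vee\psi\in\Phi$ iff $\varphi\in\Phi$ or $\psi\in\Phi$; for $\varphi\Rightarrow\psi\in\Sigma$, ($\varphi\Rightarrow\psi\in\Phi$ implies $\varphi\notin\Phi$ or $\psi\in\Phi$) and ($\psi\in\Phi$ implies $\varphi\Rightarrow\psi\in\Phi$); for $\varphi\Leftarrow\psi\in\Sigma$, ($\varphi\Leftarrow\psi\in\Phi$ implies $\varphi\in\Phi$) and ($\varphi\in\Phi,\psi\notin\Phi$ implies $\varphi\Leftarrow\psi\in\Phi$). A poset is locally linear if it is a disjoint union of linear posets. A $\Sigma$-labelled space is $(W,\le,\ell)$ with $(W,\le)$ locally linear, $\ell\colon W\to$ $\Sigma$-types, $w\le v\Rightarrow\ell(w)\supseteq\ell(v)$, such that whenever $\varphi\Rightarrow\psi\in\Sigma\setminus\ell(w)$ there is $v\le w$ with $\varphi\in\ell(v)$, $\psi\notin\ell(v)$, and whenever $\varphi\Leftarrow\psi\in\ell(w)$ there is $v\ge w$ with $\varphi\in\ell(v)$, $\psi\notin\ell(v)$. A relation $R\subseteq W\times W$ is convex if every image set $\{y: xRy\}$ and every preimage set $\{x:xRy\}$ is convex in $\le$; fully confluent if (forth–down) $x\le x'Ry'$ implies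 $xRy\le y'$ for some $y$; (forth–up) $x'\ge xRy$ implies $x'Ry'\ge y$ for some $y'$; (back–down) $x'Ry'\ge y$ implies $x'\ge xRy$ for some $x$; (back–up) $xRy\le y'$ implies $x\le x'Ry'$ for some $x'$; bi-serial if every $w$ has some $v$ with $wRv$ and some $u$ with $uRw$. A pair $(\Phi,\Psi)$ of $\Sigma$-types is sensible if for formulas in $\Sigma$: $\mathsf X\varphi\in\Phi\iff\varphi\in\Psi$; $\mathsf Y\varphi\in\Psi\iff\varphi\in\Phi$; $\mathsf G\varphi\in\Phi\iff(\varphi\in\Phi$ and $\mathsf G\varphi\in\Psi)$; $\mathsf H\varphi\in\Psi\iff(\varphi\in\Psi$ and $\mathsf H\varphi\in\Phi)$; $\varphi\,\mathsf U\,\psi\in\Phi\iff(\psi\in\Phi$ or ($\varphi\in\Phi$ and $\varphi\,\mathsf U\,\psi\in\Psi$)); $\varphi\,\mathsf S\,\psi\in\Psi\iff(\psi\in\Psi$ or ($\varphi\in\Psi$ and $\varphi\,\mathsf S\,\psi\in\Phi$)). $R$ is sensible if $(\ell(w),\ell(v))$ is sensible whenever $wRv$. $R$ is $\omega$-sensible if: $\mathsf G\varphi\in\Sigma\setminus\ell(w)$ implies some $v$ with $wR^nv$ ($n\ge0$) and $\varphi\notin\ell(v)$; $\mathsf H\varphi\in\Sigma\setminus\ell(w)$ implies some $v$ with $vR^nw$ and $\varphi\notin\ell(v)$; $\varphi\,\mathsf U\,\psi\in\ell(w)$ implies some $v$ with $wR^nv$ and $\psi\in\ell(v)$; $\varphi\,\mathsf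 S\,\psi\in\ell(w)$ implies some $v$ with $vR^nw$ and $\psi\in\ell(v)$. A $\Sigma$-labelled system is a $\Sigma$-labelled space with a bi-serial, fully confluent, convex, sensible relation $R$; it is a $\Sigma$-quasimodel if moreover $R$ is $\omega$-sensible. *)

(* Defs.v *)
From Stdlib Require Import ZArith List.

Inductive formula : Type :=
| Var  : nat -> formula
| And  : formula -> formula -> formula
| Or   : formula -> formula -> formula
| Imp  : formula -> formula -> formula
| Coimp : formula -> formula -> formula
| Next : formula -> formula
| Prev : formula -> formula
| Glob : formula -> formula
| Hist : formula -> formula
| Until : formula -> formula -> formula
| Since : formula -> formula -> formula.

Section Semantics.
Variables (W T : Type) (le : W -> W -> Prop) (S Sinv : T -> T)
          (V : nat -> W -> T -> Prop).

Definition Spow (n : nat) (t : T) : T := Nat.iter n S t.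
Definition Sinvpow (n : nat) (t : T) : T := Nat.iter n Sinv t.

Fixpoint sat (f : formula) (w : W) (t : T) : Prop :=
  match f with
  | Var p => V p w t
  | And a b => sat a w t /\ sat b w t
  | Or a b => sat a w t \/ sat b w t
  | Imp a b => forall v, le v w -> sat a v t -> sat b v t
  | Coimp a b => exists v, le w v /\ sat a v t /\ ~ sat b v t
  | Next a => sat a w (S t)
  | Prev a => sat a w (Sinv t)
  | Glob a => forall n : nat, sat a w (Spow n t)
  | Hist a => forall n : nat, sat a w (Sinvpow n t)
  | Until a b => exists n : nat, sat b w (Spow n t) /\
                   forall i : nat, (i < n)%nat -> sat a w (Spow i t)
  | Since a b => exists n : nat, sat b w (Sinvpow n t) /\
                   forall i : nat, (i < n)%nat -> sat a w (Sinvpow i t)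
  end.

Definition linear_order : Prop :=
  (forall x, le x x) /\
  (forall x y z, le x y -> le y z -> le x z) /\
  (forall x y, le x y -> le y x -> x = y) /\
  (forall x y, le x y \/ le y x).

(* (W,T,<=,S,[[.]]) is a bi-relational model: (W,<=) linear, S a bijection
   of T with inverse Sinv, and valuations of variables downward closed in
   the first coordinate; [[.]] is then given by [sat]. *)
Definition birelational_model : Prop :=
  linear_order /\
  (forall t, Sinv (S t) = t) /\ (forall t, S (Sinv t) = t) /\
  (forall p w v t, le v w -> V p w t -> V p v t).

Definition falsifies (f : formula) : Prop :=
  exists w t, ~ sat f w t.
End Semantics.

Definition fset := formula -> Prop.

Definition finite_fset (Sg : fset) : Prop :=
  exists l : list formula, forall f, Sg f <-> In f l.

Definition children (f : formula) : list formula :=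
  match f with
  | Var _ => nil
  | And a b | Or a b | Imp a b | Coimp a b | Until a b | Since a b => a :: b :: nil
  | Next a | Prev a | Glob a | Hist a => a :: nil
  end.

Definition subformula_closed (Sg : fset) : Prop :=
  forall f g, Sg f -> In g (children f) -> Sg g.

Definition is_type (Sg Phi : fset) : Prop :=
  (forall f, Phi f -> Sg f) /\
  (forall a b, Sg (And a b) -> (Phi (And a b) <-> Phi a /\ Phi b)) /\
  (forall a b, Sg (Or a b) -> (Phi (Or a b) <-> Phi a \/ Phi b)) /\
  (forall a b, Sg (Imp a b) ->
     (Phi (Imp a b) -> ~ Phi a \/ Phi b) /\ (Phi b -> Phi (Imp a b))) /\
  (forall a b, Sg (Coimp a b) ->
     (Phi (Coimp a b) -> Phi a) /\ (Phi a -> ~ Phi b -> Phi (Coimp a b))).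

Section Quasimodels.
Variables (Sg : fset) (W : Type) (le : W -> W -> Prop) (l : W -> fset)
          (R : W -> W -> Prop).

Definition partial_order : Prop :=
  (forall x, le x x) /\
  (forall x y z, le x y -> le y z -> le x z) /\
  (forall x y, le x y -> le y x -> x = y).

(* disjoint union of linear posets: W is partitioned into blocks (fibres of
   f), no order relations across blocks, each block linearly ordered *)
Definition locally_linear : Prop :=
  partial_order /\
  exists (I : Type) (f : W -> I),
    (forall x y, le x y -> f x = f y) /\
    (forall x y, f x = f y -> le x y \/ le y x).

Definition labelled_space : Prop :=
  locally_linear /\
  (forall w, is_type Sg (l w)) /\
  (forall w v f, le w v -> l v f -> l w f) /\
  (forall w a b, Sg (Imp a b) -> ~ l w (Imp a b) ->
     exists v, le v w /\ l v a /\ ~ l v b) /\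
  (forall w a b, l w (Coimp a b) ->
     exists v, le w v /\ l v a /\ ~ l v b).

Definition convex_set (A : W -> Prop) : Prop :=
  forall x y z, A x -> A z -> le x y -> le y z -> A y.

Definition convex_rel : Prop :=
  (forall x, convex_set (fun y => R x y)) /\
  (forall y, convex_set (fun x => R x y)).

Definition fully_confluent : Prop :=
  (forall x x' y', le x x' -> R x' y' -> exists y, R x y /\ le y y') /\
  (forall x x' y, le x x' -> R x y -> exists y', R x' y' /\ le y y') /\
  (forall x' y' y, R x' y' -> le y y' -> exists x, le x x' /\ R x y) /\
  (forall x y y', R x y -> le y y' -> exists x', le x x' /\ R x' y').

Definition bi_serial : Prop :=
  forall w, (exists v, R w v) /\ (exists u, R u w).

Definition sensible_pair (Phi Psi : fset) : Prop :=
  (forall a, Sg (Next a) -> (Phi (Next a) <-> Psi a)) /\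
  (forall a, Sg (Prev a) -> (Psi (Prev a) <-> Phi a)) /\
  (forall a, Sg (Glob a) -> (Phi (Glob a) <-> Phi a /\ Psi (Glob a))) /\
  (forall a, Sg (Hist a) -> (Psi (Hist a) <-> Psi a /\ Phi (Hist a))) /\
  (forall a b, Sg (Until a b) ->
     (Phi (Until a b) <-> Phi b \/ (Phi a /\ Psi (Until a b)))) /\
  (forall a b, Sg (Since a b) ->
     (Psi (Since a b) <-> Psi b \/ (Psi a /\ Phi (Since a b)))).

Definition sensible_rel : Prop :=
  forall w v, R w v -> sensible_pair (l w) (l v).

Fixpoint Rpow (n : nat) (x y : W) : Prop :=
  match n with
  | O => x = y
  | S n' => exists z, R x z /\ Rpow n' z y
  end.

Definition omega_sensible : Prop :=
  (forall w a, Sg (Glob a) -> ~ l w (Glob a) ->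
     exists n v, Rpow n w v /\ ~ l v a) /\
  (forall w a, Sg (Hist a) -> ~ l w (Hist a) ->
     exists n v, Rpow n v w /\ ~ l v a) /\
  (forall w a b, l w (Until a b) -> exists n v, Rpow n w v /\ l v b) /\
  (forall w a b, l w (Since a b) -> exists n v, Rpow n v w /\ l v b).

Definition labelled_system : Prop :=
  labelled_space /\ bi_serial /\ fully_confluent /\ convex_rel /\ sensible_rel.

Definition quasimodel : Prop := labelled_system /\ omega_sensible.
End Quasimodels.

(* Main.v *)
Require Import Defs.
From Stdlib Require Import ZArith List.
From Stdlib Require Import QArith Qcanon Psatz Lqa Lia Classical ClassicalEpsilon Sorting Cantor.
Import ListNotations.

Module M1.


Lemma sqrt2_irr_nat : forall n (a b : Z), (Z.abs b < Z.of_nat n)%Z -> (2 * a * a = b * b)%Z -> b = 0%Z.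
Proof.
  induction n; intros a b Hb He. lia.
  destruct (Z.eq_dec b 0) as [|Hb0]; [assumption|exfalso].
  destruct (Z.Even_or_Odd b) as [[c Hc]|[c Hc]]; subst b.
  - assert (Ha : (2 * c * c = a * a)%Z) by nia.
    assert (a = 0%Z).
    { apply (IHn c a); [|exact Ha]. assert (a * a < 4 * c * c)%Z by nia.
      assert (Z.abs (2*c) = 2 * Z.abs c)%Z by lia. nia. }
    subst a. nia.
  - nia.
Qed.

Lemma sqrt2_irr : forall a b : Z, (2 * a * a = b * b)%Z -> b = 0%Z.
Proof. intros a b. apply (sqrt2_irr_nat (S (Z.to_nat (Z.abs b)))). lia. Qed.

Lemma sqrt2_Q : forall s d : Q, (0 < d)%Q -> ~ (2 * s * s == d * d)%Q.
Proof.
  intros [sn sd] [dn dd] Hd H. unfold Qeq, Qmult in H. cbn [Qnum Qden] in H.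
  rewrite !Pos2Z.inj_mul in H. unfold Qlt in Hd. cbn [Qnum Qden] in Hd.
  assert (2 * (sn * Zpos dd) * (sn * Zpos dd) = (dn * Zpos sd) * (dn * Zpos sd))%Z by nia.
  apply sqrt2_irr in H0. nia.
Qed.

Lemma Q2Qc_this : forall q, (this (Q2Qc q) == q)%Q.
Proof. intro q. simpl. apply Qred_correct. Qed.

Definition gapG (u v x : Qc) : Prop :=
  let d := (this v - this u)%Q in let s := (this x - this u)%Q in
  (s < 0)%Q \/ (2 * s * s < d * d)%Q.

Lemma gap_exists : forall u v : Qc, (u < v)%Qc ->
  exists G : Qc -> Prop,
    (forall x y, (x <= y)%Qc -> G y -> G x) /\ G u /\ ~ G v /\
    (forall x, G x -> exists y, (x < y)%Qc /\ G y) /\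
    (forall x, ~ G x -> exists y, (y < x)%Qc /\ ~ G y).
Proof.
  Local Open Scope Q_scope.
  intros u v Huv. exists (gapG u v). unfold gapG, Qclt, Qcle in *.
  repeat split.
  - intros x y Hxy [H|H]; [left; lra|].
    destruct (Qlt_le_dec (this x - this u) 0); [left; auto|right]. nra.
  - right. nra.
  - intros [H|H]; nra.
  - intros x [H|H].
    + exists u. split; [lra|]. right. nra.
    + destruct (Qlt_le_dec (this x - this u) 0) as [Hs|Hs].
      * exists u. split; [lra|]. right. nra.
      * set (d := this v - this u) in *. set (s := this x - this u) in *.
        set (e := (d*d - 2*s*s) / (8 * d)).
        assert (Hd : 0 < d) by (unfold d; lra).
        assert (He : e * (8 * d) == d*d - 2*s*s) by (unfold e; field; lra).
        assert (He0 : 0 < e).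
        { unfold e. apply Qlt_shift_div_l; lra. }
        assert (Hsd : s < d) by nra.
        exists (Q2Qc (this x + e)). rewrite !Q2Qc_this. split; [lra|]. right.
        assert (Ht : this x + e - this u == s + e) by (unfold s; ring). rewrite Ht.
        nra.
  - intros x H. apply Decidable.not_or in H. destruct H as [H1 H2].
    apply Qnot_lt_le in H1. apply Qnot_lt_le in H2.
    set (d := this v - this u) in *. set (s := this x - this u) in *.
    assert (Hd : 0 < d) by (unfold d; lra).
    assert (H3 : d * d < 2 * s * s).
    { destruct (Qle_lt_or_eq _ _ H2) as [?|Heq]; auto. exfalso. apply (sqrt2_Q s d Hd). symmetry in Heq. exact Heq. }
    assert (Hs : 0 < s) by nra.
    set (e := (2*s*s - d*d) / (8 * s)).
    assert (He : e * (8 * s) == 2*s*s - d*d) by (unfold e; field; lra).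
    assert (He0 : 0 < e). { unfold e. apply Qlt_shift_div_l; lra. }
    exists (Q2Qc (this x - e)). rewrite !Q2Qc_this. split; [lra|].
    assert (Ht : this x - e - this u == s - e) by (unfold s; ring). rewrite Ht.
    intros [H|H]; nra.
Qed.

End M1.
Import M1.

Module M2.
Local Open Scope Qc_scope.

Ltac qlra := unfold Qcle, Qclt in *; lra.

Lemma choice_fun {A B : Type} (P : A -> B -> Prop) :
  (forall x, exists y, P x y) -> exists f : A -> B, forall x, P x (f x).
Proof.
  intro H. exists (fun x => proj1_sig (constructive_indefinite_description _ (H x))).
  intro x. exact (proj2_sig (constructive_indefinite_description _ (H x))).
Qed.

Fixpoint fidx (P : nat -> Prop) (n j : nat) : nat :=
  match n with
  | O => j
  | S n' => if excluded_middle_informative (P j) then j else fidx P n' (S j)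
  end.

Lemma fidx_spec (P : nat -> Prop) : forall n j,
  (j <= fidx P n j <= j + n)%nat /\
  (forall i, (j <= i < fidx P n j)%nat -> ~ P i) /\
  ((fidx P n j < j + n)%nat -> P (fidx P n j)).
Proof.
  induction n; intros j; simpl.
  - split; [lia|]. split; [intros; lia| intros; lia].
  - destruct (excluded_middle_informative (P j)) as [Hp|Hp].
    + split; [lia|]. split; [intros; lia|auto].
    + destruct (IHn (S j)) as [H1 [H2 H3]]. split; [lia|]. split.
      * intros i Hi. destruct (Nat.eq_dec i j); [subst; auto|]. apply H2; lia.
      * intro. apply H3; lia.
Qed.

Lemma fidx_le (P : nat -> Prop) : forall n j i,
  (j <= i < j + n)%nat -> P i -> (fidx P n j <= i)%nat.
Proof.
  intros n j i Hi Pi. destruct (fidx_spec P n j) as [H1 [H2 H3]].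
  destruct (Nat.le_gt_cases (fidx P n j) i); auto.
  exfalso. apply (H2 i); auto; lia.
Qed.

Lemma Qc_up : forall x : Qc, x < Q2Qc (this x + 1).
Proof. intro x. unfold Qclt. rewrite Q2Qc_this. lra. Qed.
Lemma Qc_dn : forall x : Qc, Q2Qc (this x - 1) < x.
Proof. intro x. unfold Qclt. rewrite Q2Qc_this. lra. Qed.

Section Partition.
Variable m : nat.
Variable A : nat -> Qc -> Prop.
Variable r : Qc.
Variable jr : nat.
Hypothesis Hjr : (jr <= m)%nat.
Hypothesis Hr : A jr r.
Hypothesis Hconv : forall j w1 w2 w3, A j w1 -> A j w3 -> w1 <= w2 -> w2 <= w3 -> A j w2.
Hypothesis Hopen : forall j w, A j w -> (exists u, u < w /\ A j u) /\ (exists v, w < v /\ A j v).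
Hypothesis Hlo : forall j k b, (j < k)%nat -> (k <= m)%nat -> A k b -> exists a, A j a /\ a <= b.
Hypothesis Hhi : forall j k a, (j < k)%nat -> (k <= m)%nat -> A j a -> exists b, A k b /\ a <= b.
Hypothesis Hcov : forall w, exists j, (j <= m)%nat /\ A j w.
Hypothesis HgU : forall j w, (forall a, A j a -> a < w) -> exists u, u < w /\ forall a, A j a -> a < u.
Hypothesis HgL2 : forall j w, (forall a, A j a -> w < a) -> exists v, w < v /\ forall a, A j a -> v < a.
Hypothesis HgL : forall j w, (exists a, A j a /\ a <= w) -> exists u, u < w /\ exists a, A j a /\ a <= u.

Lemma up_chain : forall k, (jr + k <= m)%nat -> exists f : nat -> Qc, f O = r /\
  (forall i, (i <= k)%nat -> A (jr + i) (f i)) /\ (forall i, (i < k)%nat -> f i < f (S i)).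
Proof.
  induction k; intros Hk.
  - exists (fun _ => r). split; auto. split; [intros i Hi; replace (jr + i)%nat with jr by lia; auto|intros; lia].
  - destruct IHk as [f [H0 [H1 H2]]]; [lia|].
    assert (Hk' : A (jr + k) (f k)) by auto.
    destruct (Hhi (jr + k) (jr + S k) (f k)) as [b [Hb1 Hb2]]; try lia; auto.
    assert (exists v, f k < v /\ A (jr + S k) v) as [v [Hv1 Hv2]].
    { destruct (Qclt_le_dec (f k) b) as [Hlt|Hle].
      - exists b; auto.
      - assert (b = f k) by (apply Qcle_antisym; auto). subst b.
        destruct (Hopen _ _ Hb1) as [_ [v Hv]]. exists v; exact Hv. }
    exists (fun i => if Nat.eq_dec i (S k) then v else f i). split.
    + simpl. auto.
    + split.
      * intros i Hi. destruct (Nat.eq_dec i (S k)); [subst; auto|]. apply H1; lia.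
      * intros i Hi. destruct (Nat.eq_dec (S i) (S k)).
        -- assert (i = k) by lia. subst. destruct (Nat.eq_dec k (S k)); [lia|]. auto.
        -- destruct (Nat.eq_dec i (S k)); [lia|]. apply H2; lia.
Qed.

Lemma down_chain : forall k, (k <= jr)%nat -> exists f : nat -> Qc, f O = r /\
  (forall i, (i <= k)%nat -> A (jr - i) (f i)) /\ (forall i, (i < k)%nat -> f (S i) < f i).
Proof.
  induction k; intros Hk.
  - exists (fun _ => r). split; auto. split; [intros i Hi; replace (jr - i)%nat with jr by lia; auto|intros; lia].
  - destruct IHk as [f [H0 [H1 H2]]]; [lia|].
    assert (Hk' : A (jr - k) (f k)) by auto.
    destruct (Hlo (jr - S k) (jr - k) (f k)) as [b [Hb1 Hb2]]; try lia; auto.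
    assert (exists v, v < f k /\ A (jr - S k) v) as [v [Hv1 Hv2]].
    { destruct (Qclt_le_dec b (f k)) as [Hlt|Hle].
      - exists b; auto.
      - assert (b = f k) by (apply Qcle_antisym; auto). subst b.
        destruct (Hopen _ _ Hb1) as [[v Hv] _]. exists v; exact Hv. }
    exists (fun i => if Nat.eq_dec i (S k) then v else f i). split.
    + simpl. auto.
    + split.
      * intros i Hi. destruct (Nat.eq_dec i (S k)); [subst; auto|]. apply H1; lia.
      * intros i Hi. destruct (Nat.eq_dec (S i) (S k)).
        -- assert (i = k) by lia. subst. destruct (Nat.eq_dec k (S k)); [lia|]. auto.
        -- destruct (Nat.eq_dec i (S k)); [lia|]. apply H2; lia.
Qed.

Lemma z_chain : exists z : nat -> Qc, z jr = r /\ (forall j, (j <= m)%nat -> A j (z j)) /\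
  (forall j, (j < m)%nat -> z j < z (S j)).
Proof.
  destruct (up_chain (m - jr)) as [f [F0 [F1 F2]]]; [lia|].
  destruct (down_chain jr) as [g [G0 [G1 G2]]]; [lia|].
  exists (fun j => if Nat.ltb j jr then g (jr - j)%nat else f (j - jr)%nat). split; [|split].
  - destruct (Nat.ltb_spec jr jr); [lia|]. rewrite Nat.sub_diag; auto.
  - intros j Hj. destruct (Nat.ltb_spec j jr).
    + replace j with (jr - (jr - j))%nat at 1 by lia. apply G1; lia.
    + replace j with (jr + (j - jr))%nat at 1 by lia. apply F1; lia.
  - intros j Hj. destruct (Nat.ltb_spec j jr); destruct (Nat.ltb_spec (S j) jr).
    + replace (jr - j)%nat with (S (jr - S j)) by lia. apply G2; lia.
    + assert (S j = jr) by lia. rewrite H1, Nat.sub_diag, F0.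
      replace (jr - j)%nat with 1%nat by lia. rewrite <- G0. apply G2; lia.
    + lia.
    + replace (S j - jr)%nat with (S (j - jr)) by lia. apply F2; lia.
Qed.


Definition Uset j x := exists a, A j a /\ x <= a.
Definition Lset j x := forall a, A (S j) a -> x < a.

Lemma Qc_total x y : x < y \/ y <= x.
Proof. destruct (Qclt_le_dec x y); auto. Qed.

Lemma Lset_Uset : forall j x, (j < m)%nat -> Lset j x -> Uset j x.
Proof.
  intros j x Hj HL. apply NNPP. intro HU.
  destruct (Hcov x) as [k [Hk Ak]].
  destruct (Nat.lt_trichotomy k j) as [Hkj|[Hkj|Hkj]].
  - destruct (Hhi k j x Hkj ltac:(lia) Ak) as [b [Hb1 Hb2]]. apply HU. exists b; auto.
  - subst. apply HU. exists x. split; auto. apply Qcle_refl.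
  - destruct (Nat.eq_dec k (S j)).
    + subst. specialize (HL x Ak). qlra.
    + destruct (Hlo (S j) k x ltac:(lia) Hk Ak) as [a [Ha1 Ha2]].
      specialize (HL a Ha1). qlra.
Qed.

Lemma Lset_mono : forall j x, (S (S j) <= m)%nat -> Lset j x -> Lset (S j) x.
Proof.
  intros j x Hj HL b Hb.
  destruct (Hlo (S j) (S (S j)) b ltac:(lia) Hj Hb) as [a [Ha1 Ha2]].
  specialize (HL a Ha1). qlra.
Qed.

Section Gam.
Variable z : nat -> Qc.
Hypothesis Hzr : z jr = r.
Hypothesis HzA : forall j, (j <= m)%nat -> A j (z j).
Hypothesis Hzlt : forall j, (j < m)%nat -> z j < z (S j).
Variable G : nat -> Qc -> Prop.
Hypothesis HG : forall j, (j < m)%nat ->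
    (forall x y, x <= y -> G j y -> G j x) /\ G j (z j) /\ ~ G j (z (S j)) /\
    (forall x, G j x -> exists y, x < y /\ G j y) /\
    (forall x, ~ G j x -> exists y, y < x /\ ~ G j y).

Definition gam j x := Lset j x \/ (Uset j x /\ G j x).

Lemma gam_down : forall j x y, (j < m)%nat -> x <= y -> gam j y -> gam j x.
Proof.
  intros j x y Hj Hxy [HL|[HU HGy]].
  - left. intros a Ha. specialize (HL a Ha). qlra.
  - right. destruct HU as [a [Ha1 Ha2]]. split.
    + exists a. split; auto. qlra.
    + destruct (HG j Hj) as [H1 _]. eauto.
Qed.

Lemma gam_z1 : forall j, (j < m)%nat -> gam j (z j).
Proof.
  intros j Hj. right. split.
  - exists (z j). split; [apply HzA; lia|apply Qcle_refl].
  - apply (HG j Hj).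
Qed.

Lemma gam_z2 : forall j, (j < m)%nat -> ~ gam j (z (S j)).
Proof.
  intros j Hj [HL|[_ HGz]].
  - specialize (HL (z (S j)) (HzA (S j) Hj)). qlra.
  - apply (HG j Hj). auto.
Qed.

Lemma gam_U : forall j x, (j < m)%nat -> gam j x -> Uset j x.
Proof. intros j x Hj [HL|[HU _]]; auto. apply Lset_Uset; auto. Qed.

Lemma gam_L : forall j x, ~ gam j x -> exists a, A (S j) a /\ a <= x.
Proof.
  intros j x Hg. apply NNPP. intro H. apply Hg. left. intros a Ha.
  destruct (Qc_total x a); auto. exfalso. apply H. exists a; auto.
Qed.

Lemma gam_nest1 : forall j x, (S j < m)%nat -> gam j x -> gam (S j) x.
Proof.
  intros j x Hj [HL|[HU HGx]].
  - left. apply Lset_mono; auto.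
  - assert (Hxz : x < z (S j)).
    { destruct (Qc_total x (z (S j))); auto. exfalso. apply (HG j ltac:(lia)).
      destruct (HG j ltac:(lia)) as [H1 _]. eauto. }
    right. split.
    + exists (z (S j)). split; [apply HzA; lia|]. qlra.
    + destruct (HG (S j) Hj) as [H1 [H2 _]]. apply (H1 x (z (S j))); auto. qlra.
Qed.

Lemma gam_nest : forall i j x, (i <= j)%nat -> (j < m)%nat -> gam i x -> gam j x.
Proof.
  intros i j x Hij. induction Hij; intros Hm Hg; auto.
  apply gam_nest1; auto. apply IHHij; [lia|auto].
Qed.

Lemma gam_max : forall j x, (j < m)%nat -> gam j x -> exists y, x < y /\ gam j y.
Proof.
  intros j x Hj [HL|[HU HGx]].
  - destruct (HgL2 (S j) x HL) as [v [Hv1 Hv2]]. exists v. split; auto. left. exact Hv2.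
  - destruct HU as [a [Ha1 Ha2]]. destruct (Hopen _ _ Ha1) as [_ [v [Hv1 Hv2]]].
    destruct (HG j Hj) as [H1 [_ [_ [H4 _]]]]. destruct (H4 x HGx) as [y [Hy1 Hy2]].
    destruct (Qc_total y v) as [Hyv|Hyv].
    + exists y. split; auto. right. split; auto. exists v. split; auto. qlra.
    + exists v. split; [qlra|]. right. split.
      * exists v. split; auto. apply Qcle_refl.
      * apply (H1 v y); auto.
Qed.

Lemma gam_min : forall j x, (j < m)%nat -> ~ gam j x -> exists y, y < x /\ ~ gam j y.
Proof.
  intros j x Hj Hg.
  assert (HnL : ~ Lset j x) by (intro; apply Hg; left; auto).
  assert (HnUG : ~ (Uset j x /\ G j x)) by (intro; apply Hg; right; auto).
  destruct (gam_L j x Hg) as [a [Ha1 Ha2]].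
  destruct (HgL (S j) x (ex_intro _ a (conj Ha1 Ha2))) as [u1 [Hu1 [a1 [Ha11 Ha12]]]].
  assert (exists u2, u2 < x /\ ~ (Uset j u2 /\ G j u2)) as [u2 [Hu2 Hu2n]].
  { destruct (classic (Uset j x)) as [HU|HU].
    - assert (HGn : ~ G j x) by tauto.
      destruct (HG j Hj) as [_ [_ [_ [_ H5]]]]. destruct (H5 x HGn) as [y [Hy1 Hy2]].
      exists y. split; auto. tauto.
    - assert (Hall : forall a, A j a -> a < x).
      { intros b Hb. destruct (Qc_total b x); auto. exfalso. apply HU. exists b. auto. }
      destruct (HgU j x Hall) as [u [Hu1' Hu2']]. exists u. split; auto.
      intros [[b [Hb1 Hb2]] _]. specialize (Hu2' b Hb1). qlra. }
  destruct (Qc_total u1 u2) as [H12|H12].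
  - exists u2. split; auto. intros [HL|HUG].
    + specialize (HL a1 Ha11). qlra.
    + contradiction.
  - exists u1. split; auto. intros [HL|[HU HGu]].
    + specialize (HL a1 Ha11). qlra.
    + apply Hu2n. split.
      * destruct HU as [b [Hb1 Hb2]]. exists b. split; auto. qlra.
      * destruct (HG j Hj) as [H1 _]. apply (H1 u2 u1); auto.
Qed.

Definition tau x := fidx (fun j => gam j x) m 0.

Lemma tau_le : forall x, (tau x <= m)%nat.
Proof. intro x. unfold tau. destruct (fidx_spec (fun j => gam j x) m 0) as [H _]. lia. Qed.

Lemma tau_gam : forall x, (tau x < m)%nat -> gam (tau x) x.
Proof. intro x. unfold tau. destruct (fidx_spec (fun j => gam j x) m 0) as [_ [_ H]]. intro; apply H; lia. Qed.

Lemma tau_ngam : forall x i, (i < tau x)%nat -> ~ gam i x.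
Proof. intros x i Hi. unfold tau in *. destruct (fidx_spec (fun j => gam j x) m 0) as [_ [H _]]. apply H; lia. Qed.

Lemma tau_least : forall x i, (i < m)%nat -> gam i x -> (tau x <= i)%nat.
Proof. intros x i Hi Hg. unfold tau. apply fidx_le; auto; lia. Qed.

Lemma tau_mono : forall x y, x <= y -> (tau x <= tau y)%nat.
Proof.
  intros x y Hxy. destruct (Nat.lt_ge_cases (tau y) m).
  - apply tau_least; auto. apply (gam_down _ x y); auto. apply tau_gam; auto.
  - pose proof (tau_le x). lia.
Qed.

Lemma tau_z : forall j, (j <= m)%nat -> tau (z j) = j.
Proof.
  intros j Hj. apply Nat.le_antisymm.
  - destruct (Nat.eq_dec j m). subst. apply tau_le. apply tau_least. lia. apply gam_z1. lia.
  - destruct (Nat.le_gt_cases j (tau (z j))) as [|Hlt]; auto. exfalso.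
    destruct j as [|j]; [lia|].
    apply (gam_z2 j); [lia|]. apply (gam_nest (tau (z (S j))) j); try lia.
    apply tau_gam. lia.
Qed.

Lemma tau_A : forall x, A (tau x) x.
Proof.
  intro x. set (j := tau x).
  assert (Hup : exists a, A j a /\ x <= a).
  { destruct (Nat.lt_ge_cases j m).
    - apply gam_U; auto. apply tau_gam; auto.
    - assert (j = m) by (pose proof (tau_le x); unfold j in *; lia).
      destruct (Hcov x) as [k [Hk Ak]]. destruct (Nat.eq_dec k j).
      + subst. exists x. split; auto. apply Qcle_refl.
      + destruct (Hhi k j x ltac:(lia) ltac:(lia) Ak) as [b Hb]. exists b; auto. }
  assert (Hdn : exists a, A j a /\ a <= x).
  { destruct j as [|j'] eqn:Ej.
    - destruct (Hcov x) as [k [Hk Ak]]. destruct (Nat.eq_dec k 0).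
      + subst. exists x. split; auto. apply Qcle_refl.
      + destruct (Hlo 0 k x ltac:(lia) Hk Ak) as [b Hb]. exists b; auto.
    - apply gam_L. apply tau_ngam. unfold j in Ej. lia. }
  destruct Hup as [a1 [Ha1 Ha1']]. destruct Hdn as [a2 [Ha2 Ha2']].
  apply (Hconv j a2 x a1); auto.
Qed.

Lemma tau_open : forall x, exists u v, u < x /\ x < v /\ tau u = tau x /\ tau v = tau x.
Proof.
  intro x.
  assert (exists v, x < v /\ tau v = tau x) as [v [Hv1 Hv2]].
  { destruct (Nat.lt_ge_cases (tau x) m).
    - destruct (gam_max (tau x) x H (tau_gam x H)) as [v [Hv1 Hv2]].
      exists v. split; auto. apply Nat.le_antisymm.
      + apply tau_least; auto.
      + apply tau_mono. qlra.
    - pose proof (Qc_up x). exists (Q2Qc (this x + 1)). split; auto. pose proof (tau_le x). pose proof (tau_le (Q2Qc (this x + 1))).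
      assert (tau x <= tau (Q2Qc (this x + 1)))%nat by (apply tau_mono; qlra). lia. }
  assert (exists u, u < x /\ tau u = tau x) as [u [Hu1 Hu2]].
  { destruct (tau x) as [|j] eqn:Ej.
    - pose proof (Qc_dn x). exists (Q2Qc (this x - 1)). split; auto. assert (tau (Q2Qc (this x - 1)) <= tau x)%nat by (apply tau_mono; qlra). lia.
    - assert (Hj : (j < m)%nat) by (pose proof (tau_le x); lia).
      assert (Hng : ~ gam j x) by (apply tau_ngam; lia).
      destruct (gam_min j x Hj Hng) as [u [Hu1 Hu2]]. exists u. split; auto.
      apply Nat.le_antisymm.
      + rewrite <- Ej. apply tau_mono. qlra.
      + destruct (Nat.le_gt_cases (S j) (tau u)) as [|Hlt]; auto. exfalso.
        apply Hu2. apply (gam_nest (tau u) j); try lia. apply tau_gam. lia. }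
  exists u, v. auto.
Qed.

End Gam.

Theorem partition : exists tau : Qc -> nat,
  (forall w, (tau w <= m)%nat) /\ (forall w v, w <= v -> (tau w <= tau v)%nat) /\ tau r = jr /\
  (forall w, A (tau w) w) /\ (forall j, (j <= m)%nat -> exists w, tau w = j) /\
  (forall w, exists u v, u < w /\ w < v /\ tau u = tau w /\ tau v = tau w).
Proof.
  destruct z_chain as [z [Hz1 [Hz2 Hz3]]].
  destruct (choice_fun (fun (j : nat) (G : Qc -> Prop) => (j < m)%nat ->
    (forall x y, x <= y -> G y -> G x) /\ G (z j) /\ ~ G (z (S j)) /\
    (forall x, G x -> exists y, x < y /\ G y) /\
    (forall x, ~ G x -> exists y, y < x /\ ~ G y))) as [G HG].
  { intro j. destruct (Nat.lt_ge_cases j m).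
    - destruct (gap_exists (z j) (z (S j)) (Hz3 j H)) as [G HG]. exists G. auto.
    - exists (fun _ => True). intro; lia. }
  exists (tau G). split; [|split; [|split; [|split; [|split]]]].
  - apply tau_le.
  - intros; eapply (tau_mono z); eauto.
  - rewrite <- Hz1. eapply (tau_z z); eauto.
  - intros; eapply (tau_A z); eauto.
  - intros j Hj. exists (z j). eapply (tau_z z); eauto.
  - intros; eapply (tau_open z); eauto.
Qed.

End Partition.

End M2.
Import M2.

Module M3.
Import ListNotations.

Ltac splits := repeat match goal with |- _ /\ _ => split end.

Section Step.
Variable W : Type.
Variable le : W -> W -> Prop.
Variable l : W -> fset.
Variable R : W -> W -> Prop.
Variable sgl : list formula.
Hypothesis Hrefl : forall x, le x x.
Hypothesis Htrans : forall x y z, le x y -> le y z -> le x z.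
Hypothesis Hctr : forall x y z, (le x y \/ le y x) -> (le y z \/ le z y) -> (le x z \/ le z x).
Hypothesis Hlab : forall w v f, le w v -> l v f -> l w f.
Hypothesis Hfin : forall w f, l w f -> In f sgl.
Hypothesis Hfd : forall x x' y', le x x' -> R x' y' -> exists y, R x y /\ le y y'.
Hypothesis Hfu : forall x x' y, le x x' -> R x y -> exists y', R x' y' /\ le y y'.
Hypothesis Hbd : forall x' y' y, R x' y' -> le y y' -> exists x, le x x' /\ R x y.
Hypothesis Hbu : forall x y y', R x y -> le y y' -> exists x', le x x' /\ R x' y'.
Hypothesis Hcvi : forall x y1 y2 y3, R x y1 -> R x y3 -> le y1 y2 -> le y2 y3 -> R x y2.

Definition comp x y := le x y \/ le y x.
Definition lsub x y := forall f, l x f -> l y f.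
Definition leq x y := forall f, l x f <-> l y f.

Lemma comp_refl x : comp x x. Proof. left; auto. Qed.
Lemma comp_sym x y : comp x y -> comp y x. Proof. unfold comp; tauto. Qed.
Lemma comp_trans x y z : comp x y -> comp y z -> comp x z. Proof. apply Hctr. Qed.
Lemma leq_refl x : leq x x. Proof. intro; tauto. Qed.
Lemma leq_sym x y : leq x y -> leq y x. Proof. intros H f; specialize (H f); tauto. Qed.
Lemma leq_trans x y z : leq x y -> leq y z -> leq x z.
Proof. intros H1 H2 f; specialize (H1 f); specialize (H2 f); tauto. Qed.
Lemma le_lsub x y : le x y -> lsub y x. Proof. intros H f; apply Hlab; auto. Qed.

Lemma comp_nleq_le x y : comp x y -> lsub y x -> ~ leq x y -> le x y.
Proof.
  intros [H|H] Hs Hn; auto. exfalso. apply Hn. intro f. split; [apply Hlab; auto|apply Hs].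
Qed.

Lemma sandwich x y z : lsub z y -> lsub y x -> leq x z -> leq y x.
Proof. intros H1 H2 H3 f. specialize (H3 f). split; [apply H2|intro; apply H1; tauto]. Qed.

Definition code (x : W) : list formula :=
  filter (fun f => if excluded_middle_informative (l x f) then true else false) sgl.

Lemma code_leq x y : code x = code y -> leq x y.
Proof.
  intros H f. unfold code in H.
  assert (forall z g, In g (filter (fun f => if excluded_middle_informative (l z f) then true else false) sgl) <-> l z g).
  { intros z g. rewrite filter_In. destruct (excluded_middle_informative (l z g)) as [Hz|Hz].
    - split; [tauto|]. intro; split; [apply Hfin with z; auto|auto].
    - split; [intros [_ Hd]; discriminate|tauto]. }
  rewrite <- (H0 x f), <- (H0 y f), H. tauto.
Qed.

Fixpoint subs (s : list formula) : list (list formula) :=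
  match s with
  | [] => [[]]
  | x :: t => map (cons x) (subs t) ++ subs t
  end.

Lemma filter_subs (p : formula -> bool) s : In (filter p s) (subs s).
Proof.
  induction s; simpl; auto. destruct (p a); apply in_or_app; [left; apply in_map; auto|right; auto].
Qed.

Definition slt x y := le x y /\ ~ leq x y.

Lemma SS_app (Rl : W -> W -> Prop) l1 l2 : StronglySorted Rl l1 -> StronglySorted Rl l2 ->
  (forall x y, In x l1 -> In y l2 -> Rl x y) -> StronglySorted Rl (l1 ++ l2).
Proof.
  induction l1; intros H1 H2 H3; simpl; auto. inversion H1; subst. constructor.
  - apply IHl1; auto. intros; apply H3; simpl; auto.
  - apply Forall_forall. intros y Hy. apply in_app_or in Hy. destruct Hy.
    + rewrite Forall_forall in H5; auto.
    + apply H3; simpl; auto.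
Qed.

Lemma SS_filter (Rl : W -> W -> Prop) p s : StronglySorted Rl s -> StronglySorted Rl (filter p s).
Proof.
  induction s; intros H; simpl; auto. inversion H; subst. destruct (p a); auto.
  constructor; auto. apply Forall_forall. intros y Hy. apply filter_In in Hy.
  rewrite Forall_forall in H3. apply H3; tauto.
Qed.

Definition dle x y : bool := if excluded_middle_informative (le x y) then true else false.

Lemma reps_gen (a : W) : forall cs, exists ys,
  (forall y, In y ys -> comp y a) /\ StronglySorted slt ys /\
  (forall y, comp y a -> In (code y) cs -> exists y', In y' ys /\ leq y y').
Proof.
  induction cs as [|c cs IH].
  - exists []. split; [simpl; tauto|]. split; [constructor|]. simpl; tauto.
  - destruct IH as [ys [H1 [H2 H3]]].
    destruct (classic (exists y0, comp y0 a /\ code y0 = c /\ forall y', In y' ys -> ~ leq y0 y'))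
      as [[y0 [Hy1 [Hy2 Hy3]]]|Hn].
    + exists (filter (fun x => dle x y0) ys ++ y0 :: filter (fun x => negb (dle x y0)) ys).
      split; [|split].
      * intros y Hy. apply in_app_or in Hy. destruct Hy as [Hy|[Hy|Hy]].
        -- apply filter_In in Hy. apply H1; tauto.
        -- subst; auto.
        -- apply filter_In in Hy. apply H1; tauto.
      * apply SS_app.
        -- apply SS_filter; auto.
        -- constructor. apply SS_filter; auto. apply Forall_forall. intros y Hy.
           apply filter_In in Hy. destruct Hy as [Hy Hd]. unfold dle in Hd.
           destruct (excluded_middle_informative (le y y0)); [discriminate|].
           split.
           ++ assert (comp y0 y) by (eapply comp_trans; [apply Hy1|apply comp_sym, H1; auto]).
              destruct H; auto. contradiction.
           ++ intro Hq. apply (Hy3 y Hy); auto.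
        -- intros x y Hx Hy. apply filter_In in Hx. destruct Hx as [Hx Hdx].
           unfold dle in Hdx. destruct (excluded_middle_informative (le x y0)) as [Hxy0|]; [|discriminate].
           destruct Hy as [Hy|Hy].
           ++ subst. split; auto. intro Hq. apply (Hy3 x Hx). apply leq_sym; auto.
           ++ apply filter_In in Hy. destruct Hy as [Hy Hdy]. unfold dle in Hdy.
              destruct (excluded_middle_informative (le y y0)) as [|Hny]; [discriminate|].
              assert (Hy0y : le y0 y).
              { assert (comp y0 y) by (eapply comp_trans; [apply Hy1|apply comp_sym, H1; auto]).
                destruct H; auto. contradiction. }
              split; [eauto|]. intro Hq. apply (Hy3 y Hy).
              apply leq_trans with x; auto. apply (sandwich x y0 y); auto using le_lsub.
      * intros y Hy Hc. simpl in Hc. destruct Hc as [Hc|Hc].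
        -- exists y0. split; [apply in_or_app; right; left; auto|]. apply code_leq. congruence.
        -- destruct (H3 y Hy Hc) as [y' [Hy'1 Hy'2]]. exists y'. split; auto.
           apply in_or_app. destruct (dle y' y0) eqn:E.
           ++ left. apply filter_In. auto.
           ++ right. right. apply filter_In. rewrite E. auto.
    + exists ys. split; auto. split; auto. intros y Hy Hc. simpl in Hc. destruct Hc as [Hc|Hc]; auto.
      apply NNPP. intro Hnn. apply Hn. exists y. split; auto. split; auto.
      intros y' Hy' Hq. apply Hnn. exists y'; auto.
Qed.

Lemma SS_nth (Rl : W -> W -> Prop) d : forall s i j, StronglySorted Rl s -> (i < j < length s)%nat ->
  Rl (nth i s d) (nth j s d).
Proof.
  induction s; intros i j H Hij; simpl in *; [lia|]. inversion H; subst.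
  destruct i; destruct j; try lia.
  - rewrite Forall_forall in H3. apply H3. apply nth_In. lia.
  - apply IHs; auto. lia.
Qed.

Lemma reps (a : W) : exists ys, (forall y, In y ys -> comp y a) /\ StronglySorted slt ys /\
  (forall y, comp y a -> exists y', In y' ys /\ leq y y').
Proof.
  destruct (reps_gen a (subs sgl)) as [ys [H1 [H2 H3]]]. exists ys. split; auto. split; auto.
  intros y Hy. apply H3; auto. apply filter_subs.
Qed.


Lemma lsub_leq x y : lsub x y -> lsub y x -> leq x y.
Proof. intros H1 H2 f; split; auto. Qed.
Lemma leq_lsub x y : leq x y -> lsub x y.
Proof. intros H f; apply H. Qed.
Lemma lsub_trans x y z : lsub x y -> lsub y z -> lsub x z.
Proof. intros H1 H2 f Hf; auto. Qed.

Definition valid (col : Qc -> W) : Prop :=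
  (forall w v, comp (col w) (col v)) /\
  (forall w v, (w <= v)%Qc -> lsub (col v) (col w)) /\
  (forall w y, comp y (col w) -> exists v, leq (col v) y) /\
  (forall w, exists u v, (u < w)%Qc /\ (w < v)%Qc /\ leq (col u) (col w) /\ leq (col v) (col w)).

Lemma In_idx (ys : list W) d y : In y ys -> exists j, (j < length ys)%nat /\ nth j ys d = y.
Proof. intro H. apply In_nth; auto. Qed.

Lemma step (col : Qc -> W) (r : Qc) (x1 : W) : valid col -> R (col r) x1 ->
  exists col', valid col' /\ col' r = x1 /\
    forall w, exists p q, R p q /\ leq p (col w) /\ leq q (col' w).
Proof.
  intros [V1 [V2 [V3 V4]]] HR.
  destruct (reps x1) as [ys [Y1 [Y2 Y3]]].
  set (a := col r).
  destruct (Y3 x1 (comp_refl x1)) as [y1 [Hy1in Hy1q]].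
  destruct (In_idx ys x1 y1 Hy1in) as [jr [Hjr Hjry]].
  set (m := (length ys - 1)%nat).
  set (A := fun j w => exists p q, comp p a /\ leq p (col w) /\ R p q /\ comp q x1 /\ leq q (nth j ys x1)).
  assert (Ynth : forall j, (j < length ys)%nat -> comp (nth j ys x1) x1).
  { intros j Hj. apply Y1. apply nth_In; auto. }
  assert (Ysort : forall i j, (i < j < length ys)%nat -> slt (nth i ys x1) (nth j ys x1)).
  { intros. apply SS_nth; auto. }
  assert (Hsat : forall j w w', A j w -> leq (col w) (col w') -> A j w').
  { intros j w w' [p [q [H1 [H2 [H3 [H4 H5]]]]]] Hq. exists p, q. splits; auto.
    eapply leq_trans; eauto. }
  assert (Hmid : forall x y z, (x <= y)%Qc -> (y <= z)%Qc -> leq (col x) (col z) -> leq (col y) (col z)).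
  { intros x y z Hxy Hyz Hq. apply lsub_leq.
    - apply lsub_trans with (col x); [apply V2; auto|apply leq_lsub; auto].
    - apply V2; auto. }
  assert (Hca : forall w, comp (col w) a) by (intro; apply V1).
  unshelve refine (let Hp := partition m A r jr _ _ _ _ _ _ _ _ _ _ in _).
  - unfold m; lia.
  - exists (col r), x1. splits; auto using comp_refl, leq_refl. rewrite Hjry; auto.
  -
    intros j w1 w2 w3 [p1 [q1 [P1 [P2 [P3 [P4 P5]]]]]] [p3 [q3 [Q1 [Q2 [Q3 [Q4 Q5]]]]]] H12 H23.
    destruct (classic (leq (col w2) (col w1))) as [E1|E1].
    { apply Hsat with w1; [exists p1, q1; splits; auto|apply leq_sym; auto]. }
    destruct (classic (leq (col w2) (col w3))) as [E3|E3].
    { apply Hsat with w3; [exists p3, q3; splits; auto|apply leq_sym; auto]. }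
    assert (Hp12 : le p1 (col w2)).
    { apply comp_nleq_le.
      - eapply comp_trans; [exact P1|apply comp_sym; auto].
      - apply lsub_trans with (col w1); [apply V2; auto|apply leq_lsub, leq_sym; auto].
      - intro Hq. apply E1. apply leq_sym. eapply leq_trans; [apply leq_sym; exact P2|exact Hq]. }
    assert (Hp23 : le (col w2) p3).
    { apply comp_nleq_le.
      - eapply comp_trans; [apply Hca|apply comp_sym; auto].
      - apply lsub_trans with (col w3); [apply leq_lsub; auto|apply V2; auto].
      - intro Hq. apply E3. eapply leq_trans; [exact Hq|exact Q2]. }
    destruct (Hfd _ _ _ Hp23 Q3) as [q [Hq1 Hq2]].
    destruct (Hfu _ _ _ Hp12 P3) as [q' [Hq'1 Hq'2]].
    assert (Cq : comp q q1).
    { eapply comp_trans; [left; exact Hq2|]. eapply comp_trans; [exact Q4|apply comp_sym; auto]. }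
    destruct Cq as [Hqq1|Hqq1].
    + exists (col w2), q1. splits; [apply Hca|apply leq_refl|apply (Hcvi (col w2) q q1 q'); auto|auto|auto].
    + exists (col w2), q. splits; auto using leq_refl.
      * eapply comp_trans; [left; exact Hq2|exact Q4].
      * apply lsub_leq.
        -- apply lsub_trans with q1; [apply le_lsub; auto|apply leq_lsub; auto].
        -- apply lsub_trans with q3; [apply leq_lsub, leq_sym; auto|apply le_lsub; auto].
  -
    intros j w Hw. destruct (V4 w) as [u [v [Hu [Hv [Hu' Hv']]]]]. split.
    + exists u. split; auto. apply Hsat with w; auto. apply leq_sym; auto.
    + exists v. split; auto. apply Hsat with w; auto. apply leq_sym; auto.
  -
    intros j k b Hjk Hkm [p [q [P1 [P2 [P3 [P4 P5]]]]]].
    assert (Hk : (k < length ys)%nat) by (unfold m in *; lia).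
    destruct (Ysort j k ltac:(lia)) as [S1 S2].
    assert (Hjq : le (nth j ys x1) q).
    { apply comp_nleq_le.
      - eapply comp_trans; [apply Ynth; lia|apply comp_sym; auto].
      - apply lsub_trans with (nth k ys x1); [apply leq_lsub; auto|apply le_lsub; auto].
      - intro Hq. apply S2. eapply leq_trans; eauto. }
    destruct (Hbd _ _ _ P3 Hjq) as [p' [Hp'1 Hp'2]].
    assert (Cp' : comp p' a) by (eapply comp_trans; [left; exact Hp'1|exact P1]).
    destruct (V3 r p' Cp') as [v Hv].
    assert (Av : A j v).
    { exists p', (nth j ys x1). splits; [exact Cp'|apply leq_sym; exact Hv|exact Hp'2|apply Ynth; lia|apply leq_refl]. }
    destruct (Qclt_le_dec b v) as [Hbv|Hvb].
    + exists b. split; [|apply Qcle_refl]. apply Hsat with v; auto.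
      apply lsub_leq.
      * apply V2. apply Qclt_le_weak; auto.
      * apply lsub_trans with p; [apply leq_lsub, leq_sym; auto|].
        apply lsub_trans with p'; [apply le_lsub; auto|apply leq_lsub, leq_sym; auto].
    + exists v. auto.
  -
    intros j k w0 Hjk Hkm [p [q [P1 [P2 [P3 [P4 P5]]]]]].
    assert (Hk : (k < length ys)%nat) by (unfold m in *; lia).
    destruct (Ysort j k ltac:(lia)) as [S1 S2].
    assert (Hqk : le q (nth k ys x1)).
    { apply comp_nleq_le.
      - eapply comp_trans; [exact P4|apply comp_sym; apply Ynth; lia].
      - apply lsub_trans with (nth j ys x1); [apply le_lsub; auto|apply leq_lsub, leq_sym; auto].
      - intro Hq. apply S2. eapply leq_trans; [apply leq_sym; exact P5|exact Hq]. }
    destruct (Hbu _ _ _ P3 Hqk) as [p' [Hp'1 Hp'2]].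
    assert (Cp' : comp p' a) by (eapply comp_trans; [right; exact Hp'1|exact P1]).
    destruct (V3 r p' Cp') as [v Hv].
    assert (Av : A k v).
    { exists p', (nth k ys x1). splits; [exact Cp'|apply leq_sym; exact Hv|exact Hp'2|apply Ynth; lia|apply leq_refl]. }
    destruct (Qclt_le_dec v w0) as [Hvw|Hwv].
    + exists w0. split; [|apply Qcle_refl]. apply Hsat with v; auto.
      apply lsub_leq.
      * apply lsub_trans with p'; [apply leq_lsub; auto|].
        apply lsub_trans with p; [apply le_lsub; auto|apply leq_lsub; auto].
      * apply V2. apply Qclt_le_weak; auto.
    + exists v. auto.
  -
    intro w.
    assert (exists y', R (col w) y' /\ comp y' x1) as [y' [Ry' Cy']].
    { destruct (Hca w) as [H|H].
      - destruct (Hfd _ _ _ H HR) as [y [Hy1 Hy2]]. exists y. split; auto. left; auto.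
      - destruct (Hfu _ _ _ H HR) as [y [Hy1 Hy2]]. exists y. split; auto. right; auto. }
    destruct (Y3 y' Cy') as [y'' [Hy''1 Hy''2]].
    destruct (In_idx ys x1 y'' Hy''1) as [j [Hj Hjy]].
    exists j. split; [unfold m; lia|]. exists (col w), y'. splits; auto using leq_refl.
    rewrite Hjy. auto.
  -
    intros j w Hall. destruct (V4 w) as [u [v [Hu [Hv [Hu' Hv']]]]].
    exists u. split; auto. intros a' Ha'.
    destruct (Qclt_le_dec a' u) as [H|H]; auto. exfalso.
    pose proof (Hall a' Ha') as Ha'w. assert (A j w).
    { apply Hsat with a'; auto. apply (Hmid u a' w); auto. apply Qclt_le_weak; auto. }
    specialize (Hall w H0). unfold Qclt in Hall. lra.
  -
    intros j w Hall. destruct (V4 w) as [u [v [Hu [Hv [Hu' Hv']]]]].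
    exists v. split; auto. intros a' Ha'.
    destruct (Qclt_le_dec v a') as [H|H]; auto. exfalso.
    pose proof (Hall a' Ha') as Ha'w. assert (A j w).
    { apply Hsat with a'; auto. apply leq_sym. apply leq_sym in Hv'.
      apply leq_trans with (col v); auto. apply leq_sym. apply (Hmid w a' v); auto.
      apply Qclt_le_weak; auto. }
    specialize (Hall w H0). unfold Qclt in Hall. lra.
  -
    intros j w [a' [Ha' Haw]]. destruct (V4 w) as [u [v [Hu [Hv [Hu' Hv']]]]].
    exists u. split; auto.
    destruct (Qclt_le_dec u a') as [H|H].
    + exists u. split; [|apply Qcle_refl]. apply Hsat with a'; auto.
      apply leq_trans with (col w); [|apply leq_sym; auto]. apply (Hmid u a' w); auto.
      apply Qclt_le_weak; auto.
    + exists a'. auto.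
  -
    clearbody Hp. destruct Hp as [tau [T1 [T2 [T3 [T4 [T5 T6]]]]]].
    set (col' := fun w => if Qc_eq_dec w r then x1 else nth (tau w) ys x1).
    assert (Tl : forall w, (tau w < length ys)%nat) by (intro w; specialize (T1 w); unfold m in *; lia).
    assert (Cq : forall w, leq (col' w) (nth (tau w) ys x1)).
    { intro w. unfold col'. destruct (Qc_eq_dec w r) as [e|]; [rewrite e, T3, Hjry; auto|apply leq_refl]. }
    assert (Cc : forall w, comp (col' w) x1).
    { intro w. unfold col'. destruct (Qc_eq_dec w r); [apply comp_refl|apply Ynth; auto]. }
    exists col'. split; [|split].
    + split; [|split; [|split]].
      * intros w v. eapply comp_trans; [apply Cc|apply comp_sym, Cc].
      * intros w v Hwv. apply lsub_trans with (nth (tau v) ys x1); [apply leq_lsub; auto|].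
        apply lsub_trans with (nth (tau w) ys x1); [|apply leq_lsub, leq_sym; auto].
        specialize (T2 w v Hwv). destruct (Nat.eq_dec (tau w) (tau v)) as [E|E].
        -- rewrite E. intro; auto.
        -- destruct (Ysort (tau w) (tau v)) as [S1 _]; [split; [lia|auto]|]. apply le_lsub; auto.
      * intros w y Hy. assert (comp y x1) by (eapply comp_trans; eauto).
        destruct (Y3 y H) as [y'' [Hy''1 Hy''2]].
        destruct (In_idx ys x1 y'' Hy''1) as [j [Hj Hjy]].
        destruct (T5 j ltac:(unfold m; lia)) as [v Hv]. exists v.
        eapply leq_trans; [apply Cq|]. rewrite Hv, Hjy. apply leq_sym; auto.
      * intro w. destruct (T6 w) as [u [v [Hu [Hv [Hu' Hv']]]]]. exists u, v. splits; auto.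
        -- eapply leq_trans; [apply Cq|]. rewrite Hu'. apply leq_sym; auto.
        -- eapply leq_trans; [apply Cq|]. rewrite Hv'. apply leq_sym; auto.
    + unfold col'. destruct (Qc_eq_dec r r); tauto.
    + intro w. destruct (T4 w) as [p [q [P1 [P2 [P3 [P4 P5]]]]]]. exists p, q. splits; auto.
      eapply leq_trans; [exact P5|apply leq_sym; auto].
Qed.


Lemma init_col (w0 : W) : exists col, valid col /\ col (Q2Qc 0) = w0.
Proof.
  destruct (reps w0) as [ys [Y1 [Y2 Y3]]].
  destruct (Y3 w0 (comp_refl w0)) as [y1 [Hy1in Hy1q]].
  destruct (In_idx ys w0 y1 Hy1in) as [jr [Hjr Hjry]].
  set (m := (length ys - 1)%nat).
  assert (Ynth : forall j, (j < length ys)%nat -> comp (nth j ys w0) w0).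
  { intros j Hj. apply Y1. apply nth_In; auto. }
  assert (Ysort : forall i j, (i < j < length ys)%nat -> slt (nth i ys w0) (nth j ys w0)).
  { intros. apply SS_nth; auto. }
  unshelve refine (let Hp := partition m (fun _ _ => True) (Q2Qc 0) jr _ _ _ _ _ _ _ _ _ _ in _).
  - unfold m; lia.
  - exact I.
  - auto.
  - intros j w _. split; [exists (Q2Qc (this w - 1)); split; [apply Qc_dn|exact I]|exists (Q2Qc (this w + 1)); split; [apply Qc_up|exact I]].
  - intros j k b _ _ _. exists b. split; [exact I|apply Qcle_refl].
  - intros j k b _ _ _. exists b. split; [exact I|apply Qcle_refl].
  - intros w. exists 0%nat. split; [lia|exact I].
  - intros j w H. exfalso. specialize (H w I). unfold Qclt in H. lra.
  - intros j w H. exfalso. specialize (H w I). unfold Qclt in H. lra.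
  - intros j w _. exists (Q2Qc (this w - 1)). split; [apply Qc_dn|]. exists (Q2Qc (this w - 1)). split; [exact I|apply Qcle_refl].
  - clearbody Hp. destruct Hp as [tau [T1 [T2 [T3 [T4 [T5 T6]]]]]].
    set (col' := fun w => if Qc_eq_dec w (Q2Qc 0) then w0 else nth (tau w) ys w0).
    assert (Tl : forall w, (tau w < length ys)%nat) by (intro w; specialize (T1 w); unfold m in *; lia).
    assert (Cq : forall w, leq (col' w) (nth (tau w) ys w0)).
    { intro w. unfold col'. destruct (Qc_eq_dec w (Q2Qc 0)) as [e|]; [rewrite e, T3, Hjry; auto|apply leq_refl]. }
    assert (Cc : forall w, comp (col' w) w0).
    { intro w. unfold col'. destruct (Qc_eq_dec w (Q2Qc 0)); [apply comp_refl|apply Ynth; auto]. }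
    exists col'. split.
    + split; [|split; [|split]].
      * intros w v. eapply comp_trans; [apply Cc|apply comp_sym, Cc].
      * intros w v Hwv. apply lsub_trans with (nth (tau v) ys w0); [apply leq_lsub; auto|].
        apply lsub_trans with (nth (tau w) ys w0); [|apply leq_lsub, leq_sym; auto].
        specialize (T2 w v Hwv). destruct (Nat.eq_dec (tau w) (tau v)) as [E|E].
        -- rewrite E. intro; auto.
        -- destruct (Ysort (tau w) (tau v)) as [S1 _]; [split; [lia|auto]|]. apply le_lsub; auto.
      * intros w y Hy. assert (comp y w0) by (eapply comp_trans; eauto).
        destruct (Y3 y H) as [y'' [Hy''1 Hy''2]].
        destruct (In_idx ys w0 y'' Hy''1) as [j [Hj Hjy]].
        destruct (T5 j ltac:(unfold m; lia)) as [v Hv]. exists v.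
        eapply leq_trans; [apply Cq|]. rewrite Hv, Hjy. apply leq_sym; auto.
      * intro w. destruct (T6 w) as [u [v [Hu [Hv [Hu' Hv']]]]]. exists u, v. splits; auto.
        -- eapply leq_trans; [apply Cq|]. rewrite Hu'. apply leq_sym; auto.
        -- eapply leq_trans; [apply Cq|]. rewrite Hv'. apply leq_sym; auto.
    + unfold col'. destruct (Qc_eq_dec (Q2Qc 0) (Q2Qc 0)); tauto.
Qed.

Hypothesis Hser : forall x, exists y, R x y.
Variable pend dn : nat -> W -> Prop.
Hypothesis Hreal : forall j x, pend j x -> exists n v, Rpow W R n x v /\ dn j v.

Fixpoint Rpath (x : W) (ps : list W) : Prop :=
  match ps with
  | [] => True
  | y :: ps' => R x y /\ Rpath y ps'
  end.

Lemma Rpow_path : forall n x v, Rpow W R n x v -> exists ps, length ps = n /\ Rpath x ps /\ nth n (x :: ps) x = v.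
Proof.
  induction n; intros x v H; simpl in H.
  - subst. exists []. simpl. auto.
  - destruct H as [z [Hz1 Hz2]]. destruct (IHn z v Hz2) as [ps [H1 [H2 H3]]].
    exists (z :: ps). splits; [simpl; auto|simpl; auto|].
    change (nth n (z :: ps) x = v). rewrite nth_indep with (d' := z); auto. simpl; lia.
Qed.

Definition pathspec (x : W) (j : nat) (ps : list W) : Prop :=
  ps <> [] /\ Rpath x ps /\ (pend j x -> exists i, (i <= length ps)%nat /\ dn j (nth i (x :: ps) x)).

Lemma pathspec_ex x j : exists ps, pathspec x j ps.
Proof.
  destruct (classic (pend j x)) as [Hp|Hp].
  - destruct (Hreal j x Hp) as [n [v [Hn Hv]]]. destruct (Rpow_path n x v Hn) as [ps [H1 [H2 H3]]].
    destruct ps as [|y ps'].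
    + simpl in H1. subst n. simpl in H3. subst v. destruct (Hser x) as [y Hy].
      exists [y]. split; [discriminate|]. split; [simpl; auto|]. intros _. exists 0%nat. simpl. split; [lia|auto].
    + exists (y :: ps'). split; [discriminate|]. split; auto. intros _. exists n. rewrite H1, H3. split; auto.
  - destruct (Hser x) as [y Hy]. exists [y]. split; [discriminate|]. split; [simpl; auto|]. tauto.
Qed.

Definition links (c c' : Qc -> W) := forall w, exists p q, R p q /\ leq p (c w) /\ leq q (c' w).

Definition stepc (c : Qc -> W) (r : Qc) (x : W) : Qc -> W :=
  epsilon (inhabits c) (fun c' => valid c' /\ c' r = x /\ links c c').

Lemma stepc_spec c r x : valid c -> R (c r) x -> valid (stepc c r x) /\ stepc c r x r = x /\ links c (stepc c r x).
Proof.
  intros H1 H2. unfold stepc. apply epsilon_spec. destruct (step c r x H1 H2) as [c' Hc']. exists c'. exact Hc'.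
Qed.

Definition path_of (c : Qc -> W) (r : Qc) (j : nat) : list W :=
  epsilon (inhabits []) (pathspec (c r) j).

Lemma path_of_spec c r j : pathspec (c r) j (path_of c r j).
Proof. unfold path_of. apply epsilon_spec. apply pathspec_ex. Qed.

Definition zofn (a : nat) : Z :=
  if Nat.even a then Z.of_nat (a / 2) else Z.opp (Z.of_nat (a / 2 + 1)).

Lemma zofn_surj : forall z, exists a, zofn a = z.
Proof.
  intro z. destruct (Z.le_gt_cases 0 z).
  - exists (2 * Z.to_nat z)%nat. unfold zofn. rewrite Nat.even_even.
    replace (2 * Z.to_nat z / 2)%nat with (Z.to_nat z) by (rewrite Nat.mul_comm, Nat.div_mul; lia). lia.
  - exists (2 * (Z.to_nat (- z) - 1) + 1)%nat. unfold zofn. rewrite Nat.even_odd.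
    replace ((2 * (Z.to_nat (- z) - 1) + 1) / 2)%nat with (Z.to_nat (- z) - 1)%nat.
    + lia.
    + apply Nat.div_unique with 1%nat; lia.
Qed.

Definition enumQ (n : nat) : Qc :=
  let (a, b) := Cantor.of_nat n in Q2Qc (Qmake (zofn a) (Pos.of_nat (S b))).

Lemma enumQ_surj : forall q : Qc, exists n, enumQ n = q.
Proof.
  intro q. destruct (zofn_surj (Qnum (this q))) as [a Ha].
  exists (Cantor.to_nat (a, Nat.pred (Pos.to_nat (Qden (this q))))).
  unfold enumQ. rewrite Cantor.cancel_of_to. apply Qc_is_canon.
  rewrite Q2Qc_this. rewrite Ha.
  replace (Pos.of_nat (S (Nat.pred (Pos.to_nat (Qden (this q)))))) with (Qden (this q)).
  - destruct (this q); apply Qeq_refl.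
  - pose proof (Pos2Nat.is_pos (Qden (this q))). rewrite Nat.succ_pred_pos; auto. rewrite Pos2Nat.id. auto.
Qed.

Definition sched (k : nat) : Qc * nat :=
  let (a, _) := Cantor.of_nat k in let (i, j) := Cantor.of_nat a in (enumQ i, j).

Lemma sched_surj : forall r j t, exists k, (t <= k)%nat /\ sched k = (r, j).
Proof.
  intros r j t. destruct (enumQ_surj r) as [i Hi].
  exists (Cantor.to_nat (Cantor.to_nat (i, j), t)). split.
  - pose proof (Cantor.to_nat_non_decreasing (Cantor.to_nat (i, j)) t). lia.
  - unfold sched. rewrite !Cantor.cancel_of_to. rewrite Hi. auto.
Qed.

Definition state := ((Qc -> W) * Qc * list W * nat)%type.

Definition adv (st : state) : state :=
  match st with
  | (c, r, y :: ps, k) => (stepc c r y, r, ps, k)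
  | _ => st
  end.

Definition trans (st : state) : state :=
  match st with
  | (c, r, [], k) => let (r', j) := sched k in adv (c, r', path_of c r' j, S k)
  | _ => adv st
  end.

Definition sinv (st : state) : Prop :=
  match st with (c, r, ps, k) => valid c /\ Rpath (c r) ps end.

Lemma adv_ok c r y ps k : valid c -> Rpath (c r) (y :: ps) ->
  sinv (adv (c, r, y :: ps, k)) /\ links c (stepc c r y) /\ stepc c r y r = y.
Proof.
  intros Hv [Hy Hp]. simpl. destruct (stepc_spec c r y Hv Hy) as [H1 [H2 H3]].
  splits; auto. rewrite H2; auto.
Qed.

Definition cfst (st : state) : Qc -> W := match st with (c, _, _, _) => c end.

Lemma trans_ok st : sinv st -> sinv (trans st) /\ links (cfst st) (cfst (trans st)).
Proof.
  destruct st as [[[c r] ps] k]. intros [Hv Hp]. destruct ps as [|y ps].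
  - simpl. destruct (sched k) as [r' j].
    destruct (path_of_spec c r' j) as [Hne [Hpa _]].
    destruct (path_of c r' j) as [|y ps] eqn:E; [congruence|].
    destruct (adv_ok c r' y ps (S k) Hv Hpa) as [H1 [H2 _]]. split; auto.
  - simpl. destruct (adv_ok c r y ps k Hv Hp) as [H1 [H2 _]]. split; auto.
Qed.

Variable col0 : Qc -> W.
Hypothesis Hcol0 : valid col0.

Fixpoint states (t : nat) : state :=
  match t with
  | O => (col0, Q2Qc 0, [], O)
  | S t' => trans (states t')
  end.

Lemma states_inv : forall t, sinv (states t).
Proof.
  induction t; simpl.
  - split; auto.
  - apply trans_ok; auto.
Qed.

Definition cols (t : nat) : Qc -> W := cfst (states t).

Lemma cols_valid t : valid (cols t).
Proof. unfold cols. pose proof (states_inv t) as H. destruct (states t) as [[[c r] ps] k]. apply H. Qed.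

Lemma cols_links t : links (cols t) (cols (S t)).
Proof. unfold cols. simpl. apply trans_ok. apply states_inv. Qed.

Lemma pops : forall ps t c r k, states t = (c, r, ps, k) ->
  exists c', states (t + length ps) = (c', r, [], k) /\
    forall i, (i <= length ps)%nat -> cols (t + i) r = nth i (c r :: ps) (c r).
Proof.
  induction ps as [|y ps IH]; intros t c r k Hs.
  - exists c. rewrite Nat.add_0_r. split; auto. intros i Hi. assert (i = 0%nat) by (simpl in Hi; lia). subst.
    rewrite Nat.add_0_r. unfold cols. rewrite Hs. auto.
  - pose proof (states_inv t) as Hinv. rewrite Hs in Hinv. destruct Hinv as [Hv Hp].
    destruct (adv_ok c r y ps k Hv Hp) as [_ [_ Hy]].
    assert (Hs' : states (S t) = (stepc c r y, r, ps, k)) by (simpl; rewrite Hs; auto).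
    destruct (IH (S t) _ r k Hs') as [c' [H1 H2]]. exists c'. split.
    + replace (t + length (y :: ps))%nat with (S t + length ps)%nat by (simpl; lia). auto.
    + intros i Hi. destruct i as [|i].
      * rewrite Nat.add_0_r. unfold cols. rewrite Hs. auto.
      * replace (t + S i)%nat with (S t + i)%nat by lia. rewrite H2 by (simpl in Hi; lia).
        rewrite Hy. change (nth i (y :: ps) y = nth i (y :: ps) (c r)). apply nth_indep. simpl in Hi |- *. lia.
Qed.

Lemma stage_start : forall k, exists s c r, (k <= s)%nat /\ states s = (c, r, [], k).
Proof.
  induction k as [|k IH].
  - exists 0%nat, col0, (Q2Qc 0). split; auto.
  - destruct IH as [s [c [r [Hks Hs]]]].
    destruct (sched k) as [r' j] eqn:Esch.
    destruct (path_of_spec c r' j) as [Hne _].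
    destruct (path_of c r' j) as [|y ps] eqn:E; [congruence|].
    assert (Hs' : states (S s) = (stepc c r' y, r', ps, S k)).
    { simpl. rewrite Hs. simpl. rewrite Esch, E. auto. }
    destruct (pops ps (S s) _ r' (S k) Hs') as [c' [H1 _]].
    exists (S s + length ps)%nat, c', r'. split; auto. lia.
Qed.

Theorem forward_real : forall r j t, exists s, (t <= s)%nat /\
  (pend j (cols s r) -> exists n, dn j (cols (s + n) r)).
Proof.
  intros r j t. destruct (sched_surj r j t) as [k [Htk Hk]].
  destruct (stage_start k) as [s [c [r0 [Hks Hs]]]].
  exists s. split; [lia|]. intro Hp.
  assert (Hcs : cols s = c) by (unfold cols; rewrite Hs; auto).
  rewrite Hcs in Hp.
  destruct (path_of_spec c r j) as [Hne [_ Hsp]].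
  destruct (Hsp Hp) as [i [Hi Hdn]].
  destruct (path_of c r j) as [|y ps] eqn:E; [congruence|].
  pose proof (states_inv s) as Hinv. rewrite Hs in Hinv. destruct Hinv as [Hv _].
  pose proof (path_of_spec c r j) as [_ [Hpa _]]. rewrite E in Hpa.
  destruct (adv_ok c r y ps (S k) Hv Hpa) as [_ [_ Hy]].
  assert (Hs' : states (S s) = (stepc c r y, r, ps, S k)).
  { simpl. rewrite Hs. simpl. rewrite Hk, E. auto. }
  destruct (pops ps (S s) _ r (S k) Hs') as [c' [_ H2]].
  destruct i as [|i].
  - exists 0%nat. rewrite Nat.add_0_r, Hcs. exact Hdn.
  - exists (S i). replace (s + S i)%nat with (S s + i)%nat by lia.
    rewrite H2 by (simpl in Hi; lia). rewrite Hy.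
    simpl in Hdn. erewrite nth_indep; [exact Hdn|]. simpl in Hi |- *. lia.
Qed.

Theorem forward : exists cl : nat -> Qc -> W, cl O = col0 /\ (forall t, valid (cl t)) /\
  (forall t, links (cl t) (cl (S t))) /\
  (forall r j t, exists s, (t <= s)%nat /\ (pend j (cl s r) -> exists n, dn j (cl (s + n)%nat r))).
Proof.
  exists cols. splits.
  - reflexivity.
  - apply cols_valid.
  - apply cols_links.
  - apply forward_real.
Qed.
End Step.

End M3.
Import M3.

Module M5.
Import ListNotations.

Ltac splits := repeat match goal with |- _ /\ _ => split end.

Lemma Rpow_snoc {W} (R : W -> W -> Prop) : forall n x y z, Rpow W R n x y -> R y z -> Rpow W R (S n) x z.
Proof.
  induction n; intros x y z H1 H2; simpl in *.
  - subst. exists z. auto.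
  - destruct H1 as [u [Hu1 Hu2]]. exists u. split; auto. apply (IHn u y z); auto.
Qed.

Lemma Rpow_rev {W} (R : W -> W -> Prop) : forall n x y, Rpow W R n x y -> Rpow W (fun a b => R b a) n y x.
Proof.
  induction n; intros x y H.
  - simpl in *. subst. auto.
  - destruct H as [u [Hu1 Hu2]]. apply Rpow_snoc with u; auto.
Qed.

Lemma sensible_transfer Sg A B A' B' : sensible_pair Sg A B ->
  (forall f, A f <-> A' f) -> (forall f, B f <-> B' f) -> sensible_pair Sg A' B'.
Proof.
  intros [H1 [H2 [H3 [H4 [H5 H6]]]]] HA HB. unfold sensible_pair.
  splits; intros; rewrite <- ?HA, <- ?HB; auto.
Qed.

Lemma Spow_Z : forall n z, Spow Z Z.succ n z = (z + Z.of_nat n)%Z.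
Proof. induction n; intros z; simpl; [lia|]. unfold Spow in *. rewrite IHn. lia. Qed.
Lemma Sinvpow_Z : forall n z, Sinvpow Z Z.pred n z = (z - Z.of_nat n)%Z.
Proof. induction n; intros z; simpl; [lia|]. unfold Sinvpow in *. rewrite IHn. lia. Qed.

Section Main.
Variable Sg : fset.
Variable W : Type.
Variable le : W -> W -> Prop.
Variable l : W -> fset.
Variable R : W -> W -> Prop.
Variable sgl : list formula.
Hypothesis Hsgl : forall f, Sg f <-> In f sgl.
Hypothesis Hsub : subformula_closed Sg.
Hypothesis HQ : quasimodel Sg W le l R.

Ltac unq := let H := fresh in pose proof HQ as H;
  destruct H as [[[[[Qr [Qt Qa]] Qll] [Qty [Qmono [Qimp Qco]]]] [Qbs [[Qfd [Qfu [Qbd Qbu]]] [[Qci Qcp] Qsr]]]] [Qo1 [Qo2 [Qo3 Qo4]]]].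

Lemma q_refl : forall x, le x x. Proof. unq. auto. Qed.
Lemma q_trans : forall x y z, le x y -> le y z -> le x z. Proof. unq. auto. Qed.
Lemma q_ctr : forall x y z, (le x y \/ le y x) -> (le y z \/ le z y) -> (le x z \/ le z x).
Proof.
  unq. destruct Qll as [I [f [Hf1 Hf2]]]. intros x y z H1 H2. apply Hf2.
  assert (f x = f y) by (destruct H1; [apply Hf1|symmetry; apply Hf1]; auto).
  assert (f y = f z) by (destruct H2; [apply Hf1|symmetry; apply Hf1]; auto). congruence.
Qed.
Lemma q_lab : forall w v f, le w v -> l v f -> l w f. Proof. unq. auto. Qed.
Lemma q_type : forall w, is_type Sg (l w). Proof. unq. auto. Qed.
Lemma q_fin : forall w f, l w f -> In f sgl.
Proof. intros w f H. apply Hsgl. destruct (q_type w) as [H1 _]. auto. Qed.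
Lemma q_fd : forall x x' y', le x x' -> R x' y' -> exists y, R x y /\ le y y'. Proof. unq. auto. Qed.
Lemma q_fu : forall x x' y, le x x' -> R x y -> exists y', R x' y' /\ le y y'. Proof. unq. auto. Qed.
Lemma q_bd : forall x' y' y, R x' y' -> le y y' -> exists x, le x x' /\ R x y. Proof. unq. auto. Qed.
Lemma q_bu : forall x y y', R x y -> le y y' -> exists x', le x x' /\ R x' y'. Proof. unq. auto. Qed.
Lemma q_cvi : forall x y1 y2 y3, R x y1 -> R x y3 -> le y1 y2 -> le y2 y3 -> R x y2.
Proof. unq. intros x y1 y2 y3 H1 H3 H12 H23. exact (Qci x y1 y2 y3 H1 H3 H12 H23). Qed.
Lemma q_cvp : forall y x1 x2 x3, R x1 y -> R x3 y -> le x1 x2 -> le x2 x3 -> R x2 y.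
Proof. unq. intros y x1 x2 x3 H1 H3 H12 H23. exact (Qcp y x1 x2 x3 H1 H3 H12 H23). Qed.
Lemma q_serf : forall x, exists y, R x y. Proof. unq. intro x. apply Qbs. Qed.
Lemma q_serb : forall x, exists y, R y x. Proof. unq. intro x. apply Qbs. Qed.
Lemma q_sens : forall w v, R w v -> sensible_pair Sg (l w) (l v). Proof. unq. auto. Qed.
Lemma q_imp : forall w a b, Sg (Imp a b) -> ~ l w (Imp a b) -> exists v, le v w /\ l v a /\ ~ l v b.
Proof. unq. auto. Qed.
Lemma q_coimp : forall w a b, l w (Coimp a b) -> exists v, le w v /\ l v a /\ ~ l v b.
Proof. unq. auto. Qed.


Definition pendF j x := match nth j sgl (Var 0) with
  | Until a b => l x (Until a b) | Glob a => Sg (Glob a) /\ ~ l x (Glob a) | _ => False end.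
Definition dnF j x := match nth j sgl (Var 0) with
  | Until a b => l x b | Glob a => ~ l x a | _ => True end.
Definition pendB j x := match nth j sgl (Var 0) with
  | Since a b => l x (Since a b) | Hist a => Sg (Hist a) /\ ~ l x (Hist a) | _ => False end.
Definition dnB j x := match nth j sgl (Var 0) with
  | Since a b => l x b | Hist a => ~ l x a | _ => True end.
Definition Rop x y := R y x.

Lemma realF : forall j x, pendF j x -> exists n v, Rpow W R n x v /\ dnF j v.
Proof.
  unq. intros j x. unfold pendF, dnF. destruct (nth j sgl (Var 0)); try contradiction.
  - intros [H1 H2]. apply Qo1; auto.
  - intro H. apply (Qo3 x f1 f2 H).
Qed.

Lemma realB : forall j x, pendB j x -> exists n v, Rpow W Rop n x v /\ dnB j v.
Proof.
  unq. intros j x. unfold pendB, dnB. destruct (nth j sgl (Var 0)); try contradiction.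
  - intros [H1 H2]. destruct (Qo2 x f H1 H2) as [n [v [Hn Hv]]]. exists n, v. split; auto.
    apply Rpow_rev; auto.
  - intro H. destruct (Qo4 x f1 f2 H) as [n [v [Hn Hv]]]. exists n, v. split; auto.
    apply Rpow_rev; auto.
Qed.


Section Truth.
Variable cf cb : nat -> Qc -> W.
Hypothesis Hcf0 : cf O = cb O.
Hypothesis Hcfv : forall t, valid W le l (cf t).
Hypothesis Hcbv : forall t, valid W le l (cb t).
Hypothesis Hcfl : forall t, links W l R (cf t) (cf (S t)).
Hypothesis Hcbl : forall t, links W l Rop (cb t) (cb (S t)).
Hypothesis Hcfr : forall r j t, exists s, (t <= s)%nat /\ (pendF j (cf s r) -> exists n, dnF j (cf (s + n)%nat r)).
Hypothesis Hcbr : forall r j t, exists s, (t <= s)%nat /\ (pendB j (cb s r) -> exists n, dnB j (cb (s + n)%nat r)).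

Definition col (z : Z) : Qc -> W := if Z.leb 0 z then cf (Z.to_nat z) else cb (Z.to_nat (- z)).

Lemma col_pos s : col (Z.of_nat s) = cf s.
Proof. unfold col. destruct (Z.leb_spec 0 (Z.of_nat s)); [|lia]. rewrite Nat2Z.id. auto. Qed.

Lemma col_neg s : col (- Z.of_nat s) = cb s.
Proof.
  unfold col. destruct (Z.leb_spec 0 (- Z.of_nat s)).
  - assert (s = O) by lia. subst. simpl. auto.
  - rewrite Z.opp_involutive, Nat2Z.id. auto.
Qed.

Lemma col_valid z : valid W le l (col z).
Proof. unfold col. destruct (Z.leb 0 z); auto. Qed.

Lemma sens z w : sensible_pair Sg (l (col z w)) (l (col (z + 1) w)).
Proof.
  destruct (Z.le_gt_cases 0 z).
  - replace z with (Z.of_nat (Z.to_nat z)) by lia.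
    replace (Z.of_nat (Z.to_nat z) + 1)%Z with (Z.of_nat (S (Z.to_nat z))) by lia.
    rewrite !col_pos. destruct (Hcfl (Z.to_nat z) w) as [p [q [H1 [H2 H3]]]].
    eapply sensible_transfer; [apply q_sens; eauto| |]; auto.
  - replace z with (- Z.of_nat (S (Z.to_nat (- (z + 1)))))%Z by lia.
    replace (- Z.of_nat (S (Z.to_nat (- (z + 1)))) + 1)%Z with (- Z.of_nat (Z.to_nat (- (z + 1))))%Z by lia.
    rewrite !col_neg. destruct (Hcbl (Z.to_nat (- (z + 1))) w) as [p [q [H1 [H2 H3]]]].
    eapply sensible_transfer; [apply q_sens; eauto| |]; auto.
Qed.


Lemma sub1 f g : Sg f -> In g (children f) -> Sg g.
Proof. apply Hsub. Qed.

Lemma idx f : Sg f -> exists j, nth j sgl (Var 0) = f.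
Proof. intro H. apply Hsgl in H. destruct (In_nth sgl f (Var 0) H) as [j [_ Hj]]. exists j; auto. Qed.

Lemma sensB z w : sensible_pair Sg (l (col (z - 1) w)) (l (col z w)).
Proof. pose proof (sens (z - 1) w) as H. replace (z - 1 + 1)%Z with z in H by lia. exact H. Qed.

Lemma G1 a w : Sg (Glob a) -> forall n z, l (col z w) (Glob a) -> l (col (z + Z.of_nat n) w) a.
Proof.
  intros HS n. induction n; intros z H; destruct (sens z w) as [_ [_ [Hg _]]]; apply Hg in H; auto.
  - rewrite Z.add_0_r. tauto.
  - replace (z + Z.of_nat (S n))%Z with ((z + 1) + Z.of_nat n)%Z by lia. apply IHn. tauto.
Qed.

Lemma G2 a w z : Sg (Glob a) -> ~ l (col z w) (Glob a) -> forall k,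
  (exists i, (i < k)%nat /\ ~ l (col (z + Z.of_nat i) w) a) \/ ~ l (col (z + Z.of_nat k) w) (Glob a).
Proof.
  intros HS H k. induction k.
  - right. rewrite Z.add_0_r. auto.
  - destruct IHk as [[i [Hi1 Hi2]]|Hk].
    + left. exists i. split; auto.
    + destruct (classic (l (col (z + Z.of_nat k) w) a)) as [Ha|Ha].
      * right. intro Hg. apply Hk. destruct (sens (z + Z.of_nat k) w) as [_ [_ [HG _]]].
        apply HG; auto. split; auto. replace (z + Z.of_nat k + 1)%Z with (z + Z.of_nat (S k))%Z by lia. auto.
      * left. exists k. split; auto.
Qed.

Lemma G3 a w z : Sg (Glob a) -> ~ l (col z w) (Glob a) -> exists n, ~ l (col (z + Z.of_nat n) w) a.
Proof.
  intros HS H. destruct (idx _ HS) as [j Hj].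
  destruct (Hcfr w j (Z.to_nat z)) as [s [Hs Hr]].
  set (k := Z.to_nat (Z.of_nat s - z)).
  assert (Ek : (z + Z.of_nat k)%Z = Z.of_nat s) by (unfold k; lia).
  destruct (G2 a w z HS H k) as [[i [_ Hi]]|Hk].
  - exists i; auto.
  - rewrite Ek, col_pos in Hk. destruct Hr as [n Hn].
    + unfold pendF. rewrite Hj. auto.
    + unfold dnF in Hn. rewrite Hj in Hn. exists (k + n)%nat.
      replace (z + Z.of_nat (k + n))%Z with (Z.of_nat (s + n)) by lia. rewrite col_pos. auto.
Qed.

Lemma U1 a b w : Sg (Until a b) -> forall n z, l (col (z + Z.of_nat n) w) b ->
  (forall i, (i < n)%nat -> l (col (z + Z.of_nat i) w) a) -> l (col z w) (Until a b).
Proof.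
  intros HS n. induction n; intros z Hb Ha; destruct (sens z w) as [_ [_ [_ [_ [Hu _]]]]]; apply Hu; auto.
  - left. rewrite Z.add_0_r in Hb. auto.
  - right. split.
    + specialize (Ha O ltac:(lia)). rewrite Z.add_0_r in Ha. auto.
    + apply IHn.
      * replace (z + 1 + Z.of_nat n)%Z with (z + Z.of_nat (S n))%Z by lia. auto.
      * intros i Hi. replace (z + 1 + Z.of_nat i)%Z with (z + Z.of_nat (S i))%Z by lia. apply Ha. lia.
Qed.

Lemma U2 a b w z : Sg (Until a b) -> l (col z w) (Until a b) -> forall k,
  (exists i, (i < k)%nat /\ l (col (z + Z.of_nat i) w) b) \/ l (col (z + Z.of_nat k) w) (Until a b).
Proof.
  intros HS H k. induction k.
  - right. rewrite Z.add_0_r. auto.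
  - destruct IHk as [[i [Hi1 Hi2]]|Hk].
    + left. exists i. split; auto.
    + destruct (sens (z + Z.of_nat k) w) as [_ [_ [_ [_ [HU _]]]]].
      apply HU in Hk; auto. destruct Hk as [Hb|[_ Hk]].
      * left. exists k. split; auto.
      * right. replace (z + Z.of_nat (S k))%Z with (z + Z.of_nat k + 1)%Z by lia. auto.
Qed.

Lemma U3 a b w z : Sg (Until a b) -> l (col z w) (Until a b) -> exists n, l (col (z + Z.of_nat n) w) b.
Proof.
  intros HS H. destruct (idx _ HS) as [j Hj].
  destruct (Hcfr w j (Z.to_nat z)) as [s [Hs Hr]].
  set (k := Z.to_nat (Z.of_nat s - z)).
  assert (Ek : (z + Z.of_nat k)%Z = Z.of_nat s) by (unfold k; lia).
  destruct (U2 a b w z HS H k) as [[i [_ Hi]]|Hk].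
  - exists i; auto.
  - rewrite Ek, col_pos in Hk. destruct Hr as [n Hn].
    + unfold pendF. rewrite Hj. auto.
    + unfold dnF in Hn. rewrite Hj in Hn. exists (k + n)%nat.
      replace (z + Z.of_nat (k + n))%Z with (Z.of_nat (s + n)) by lia. rewrite col_pos. auto.
Qed.

Lemma U4 a b w : Sg (Until a b) -> forall n z, l (col z w) (Until a b) -> l (col (z + Z.of_nat n) w) b ->
  exists n', l (col (z + Z.of_nat n') w) b /\ forall i, (i < n')%nat -> l (col (z + Z.of_nat i) w) a.
Proof.
  intros HS n. induction n; intros z Hu Hb.
  - exists O. split; auto. intros; lia.
  - destruct (classic (l (col z w) b)) as [Hb0|Hb0].
    + exists O. rewrite Z.add_0_r. split; auto. intros; lia.
    + destruct (sens z w) as [_ [_ [_ [_ [HU _]]]]]. apply HU in Hu; auto.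
      destruct Hu as [Hu|[Ha Hu]]; [contradiction|].
      destruct (IHn (z + 1)%Z Hu) as [n' [Hn'1 Hn'2]].
      { replace (z + 1 + Z.of_nat n)%Z with (z + Z.of_nat (S n))%Z by lia. auto. }
      exists (S n'). split.
      * replace (z + Z.of_nat (S n'))%Z with (z + 1 + Z.of_nat n')%Z by lia. auto.
      * intros i Hi. destruct i.
        -- rewrite Z.add_0_r. auto.
        -- replace (z + Z.of_nat (S i))%Z with (z + 1 + Z.of_nat i)%Z by lia. apply Hn'2. lia.
Qed.


Lemma H1 a w : Sg (Hist a) -> forall n z, l (col z w) (Hist a) -> l (col (z - Z.of_nat n) w) a.
Proof.
  intros HS n. induction n; intros z H; destruct (sensB z w) as [_ [_ [_ [Hg _]]]]; apply Hg in H; auto.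
  - rewrite Z.sub_0_r. tauto.
  - replace (z - Z.of_nat (S n))%Z with ((z - 1) - Z.of_nat n)%Z by lia. apply IHn. tauto.
Qed.

Lemma H2 a w z : Sg (Hist a) -> ~ l (col z w) (Hist a) -> forall k,
  (exists i, (i < k)%nat /\ ~ l (col (z - Z.of_nat i) w) a) \/ ~ l (col (z - Z.of_nat k) w) (Hist a).
Proof.
  intros HS H k. induction k.
  - right. rewrite Z.sub_0_r. auto.
  - destruct IHk as [[i [Hi1 Hi2]]|Hk].
    + left. exists i. split; auto.
    + destruct (classic (l (col (z - Z.of_nat k) w) a)) as [Ha|Ha].
      * right. intro Hg. apply Hk. destruct (sensB (z - Z.of_nat k) w) as [_ [_ [_ [HG _]]]].
        apply HG; auto. split; auto. replace (z - Z.of_nat k - 1)%Z with (z - Z.of_nat (S k))%Z by lia. auto.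
      * left. exists k. split; auto.
Qed.

Lemma H3 a w z : Sg (Hist a) -> ~ l (col z w) (Hist a) -> exists n, ~ l (col (z - Z.of_nat n) w) a.
Proof.
  intros HS H. destruct (idx _ HS) as [j Hj].
  destruct (Hcbr w j (Z.to_nat (- z))) as [s [Hs Hr]].
  set (k := Z.to_nat (z + Z.of_nat s)).
  assert (Ek : (z - Z.of_nat k)%Z = (- Z.of_nat s)%Z) by (unfold k; lia).
  destruct (H2 a w z HS H k) as [[i [_ Hi]]|Hk].
  - exists i; auto.
  - rewrite Ek, col_neg in Hk. destruct Hr as [n Hn].
    + unfold pendB. rewrite Hj. auto.
    + unfold dnB in Hn. rewrite Hj in Hn. exists (k + n)%nat.
      replace (z - Z.of_nat (k + n))%Z with (- Z.of_nat (s + n))%Z by lia. rewrite col_neg. auto.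
Qed.

Lemma S1 a b w : Sg (Since a b) -> forall n z, l (col (z - Z.of_nat n) w) b ->
  (forall i, (i < n)%nat -> l (col (z - Z.of_nat i) w) a) -> l (col z w) (Since a b).
Proof.
  intros HS n. induction n; intros z Hb Ha; destruct (sensB z w) as [_ [_ [_ [_ [_ Hu]]]]]; apply Hu; auto.
  - left. rewrite Z.sub_0_r in Hb. auto.
  - right. split.
    + specialize (Ha O ltac:(lia)). rewrite Z.sub_0_r in Ha. auto.
    + apply IHn.
      * replace (z - 1 - Z.of_nat n)%Z with (z - Z.of_nat (S n))%Z by lia. auto.
      * intros i Hi. replace (z - 1 - Z.of_nat i)%Z with (z - Z.of_nat (S i))%Z by lia. apply Ha. lia.
Qed.

Lemma S2 a b w z : Sg (Since a b) -> l (col z w) (Since a b) -> forall k,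
  (exists i, (i < k)%nat /\ l (col (z - Z.of_nat i) w) b) \/ l (col (z - Z.of_nat k) w) (Since a b).
Proof.
  intros HS H k. induction k.
  - right. rewrite Z.sub_0_r. auto.
  - destruct IHk as [[i [Hi1 Hi2]]|Hk].
    + left. exists i. split; auto.
    + destruct (sensB (z - Z.of_nat k) w) as [_ [_ [_ [_ [_ HU]]]]].
      apply HU in Hk; auto. destruct Hk as [Hb|[_ Hk]].
      * left. exists k. split; auto.
      * right. replace (z - Z.of_nat (S k))%Z with (z - Z.of_nat k - 1)%Z by lia. auto.
Qed.

Lemma S3 a b w z : Sg (Since a b) -> l (col z w) (Since a b) -> exists n, l (col (z - Z.of_nat n) w) b.
Proof.
  intros HS H. destruct (idx _ HS) as [j Hj].
  destruct (Hcbr w j (Z.to_nat (- z))) as [s [Hs Hr]].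
  set (k := Z.to_nat (z + Z.of_nat s)).
  assert (Ek : (z - Z.of_nat k)%Z = (- Z.of_nat s)%Z) by (unfold k; lia).
  destruct (S2 a b w z HS H k) as [[i [_ Hi]]|Hk].
  - exists i; auto.
  - rewrite Ek, col_neg in Hk. destruct Hr as [n Hn].
    + unfold pendB. rewrite Hj. auto.
    + unfold dnB in Hn. rewrite Hj in Hn. exists (k + n)%nat.
      replace (z - Z.of_nat (k + n))%Z with (- Z.of_nat (s + n))%Z by lia. rewrite col_neg. auto.
Qed.

Lemma S4 a b w : Sg (Since a b) -> forall n z, l (col z w) (Since a b) -> l (col (z - Z.of_nat n) w) b ->
  exists n', l (col (z - Z.of_nat n') w) b /\ forall i, (i < n')%nat -> l (col (z - Z.of_nat i) w) a.
Proof.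
  intros HS n. induction n; intros z Hu Hb.
  - exists O. split; auto. intros; lia.
  - destruct (classic (l (col z w) b)) as [Hb0|Hb0].
    + exists O. rewrite Z.sub_0_r. split; auto. intros; lia.
    + destruct (sensB z w) as [_ [_ [_ [_ [_ HU]]]]]. apply HU in Hu; auto.
      destruct Hu as [Hu|[Ha Hu]]; [contradiction|].
      destruct (IHn (z - 1)%Z Hu) as [n' [Hn'1 Hn'2]].
      { replace (z - 1 - Z.of_nat n)%Z with (z - Z.of_nat (S n))%Z by lia. auto. }
      exists (S n'). split.
      * replace (z - Z.of_nat (S n'))%Z with (z - 1 - Z.of_nat n')%Z by lia. auto.
      * intros i Hi. destruct i.
        -- rewrite Z.sub_0_r. auto.
        -- replace (z - Z.of_nat (S i))%Z with (z - 1 - Z.of_nat i)%Z by lia. apply Hn'2. lia.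
Qed.


Definition Vm (p : nat) (w : Qc) (z : Z) : Prop := l (col z w) (Var p).

Lemma truth : forall f, Sg f -> forall w z, sat Qc Z Qcle Z.succ Z.pred Vm f w z <-> l (col z w) f.
Proof.
  induction f; intros Hf w z; simpl.
  - unfold Vm. tauto.
  - assert (Sg f1) by (apply (sub1 (And f1 f2)); simpl; auto).
    assert (Sg f2) by (apply (sub1 (And f1 f2)); simpl; auto).
    rewrite IHf1, IHf2 by auto. destruct (q_type (col z w)) as [_ [HA _]]. symmetry. apply HA; auto.
  - assert (Sg f1) by (apply (sub1 (Or f1 f2)); simpl; auto).
    assert (Sg f2) by (apply (sub1 (Or f1 f2)); simpl; auto).
    rewrite IHf1, IHf2 by auto. destruct (q_type (col z w)) as [_ [_ [HO _]]]. symmetry. apply HO; auto.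
  - assert (S1' : Sg f1) by (apply (sub1 (Imp f1 f2)); simpl; auto).
    assert (S2' : Sg f2) by (apply (sub1 (Imp f1 f2)); simpl; auto).
    destruct (col_valid z) as [V1 [V2 [V3 V4]]].
    split.
    + intro Hs. apply NNPP. intro Hn. destruct (q_imp (col z w) f1 f2 Hf Hn) as [v' [Hv'1 [Hv'2 Hv'3]]].
      destruct (V3 w v' (or_introl Hv'1)) as [v Hv].
      destruct (Qclt_le_dec w v) as [Hwv|Hvw].
      * assert (Ha : l (col z w) f1).
        { apply (V2 w v (Qclt_le_weak _ _ Hwv)). apply Hv. auto. }
        assert (Hb : l (col z w) f2).
        { apply IHf2; auto. apply Hs; [apply Qcle_refl|]. apply IHf1; auto. }
        apply Hv'3. apply (q_lab v' (col z w)); auto.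
      * assert (Hb : l (col z v) f2).
        { apply IHf2; auto. apply Hs; auto. apply IHf1; auto. apply Hv. auto. }
        apply Hv'3. apply Hv. auto.
    + intros Himp v Hvw Ha. apply IHf2; auto. apply IHf1 in Ha; auto.
      assert (Hi : l (col z v) (Imp f1 f2)) by (apply (V2 v w Hvw); auto).
      destruct (q_type (col z v)) as [_ [_ [_ [HI _]]]]. destruct (HI f1 f2 Hf) as [HI1 _].
      destruct (HI1 Hi); tauto.
  - assert (S1' : Sg f1) by (apply (sub1 (Coimp f1 f2)); simpl; auto).
    assert (S2' : Sg f2) by (apply (sub1 (Coimp f1 f2)); simpl; auto).
    destruct (col_valid z) as [V1 [V2 [V3 V4]]].
    split.
    + intros [v [Hwv [Ha Hb]]]. apply IHf1 in Ha; auto. rewrite IHf2 in Hb; auto.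
      destruct (q_type (col z v)) as [_ [_ [_ [_ HC]]]]. destruct (HC f1 f2 Hf) as [_ HC2].
      apply (V2 w v Hwv). auto.
    + intro Hc. destruct (q_coimp (col z w) f1 f2 Hc) as [v' [Hv'1 [Hv'2 Hv'3]]].
      destruct (V3 w v' (or_intror Hv'1)) as [v Hv].
      destruct (Qclt_le_dec v w) as [Hvw|Hwv].
      * exists w. split; [apply Qcle_refl|]. split.
        -- apply IHf1; auto. apply (q_lab (col z w) v'); auto.
        -- rewrite IHf2; auto. intro Hb. apply Hv'3. apply Hv. apply (V2 v w (Qclt_le_weak _ _ Hvw)). auto.
      * exists v. split; auto. split.
        -- apply IHf1; auto. apply Hv. auto.
        -- rewrite IHf2; auto. intro Hb. apply Hv'3. apply Hv. auto.
  - assert (S1' : Sg f) by (apply (sub1 (Next f)); simpl; auto).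
    rewrite IHf by auto. destruct (sens z w) as [HN _]. replace (Z.succ z) with (z + 1)%Z by lia.
    symmetry. apply HN; auto.
  - assert (S1' : Sg f) by (apply (sub1 (Prev f)); simpl; auto).
    rewrite IHf by auto. destruct (sensB z w) as [_ [HP _]]. replace (Z.pred z) with (z - 1)%Z by lia.
    symmetry. apply HP; auto.
  - assert (S1' : Sg f) by (apply (sub1 (Glob f)); simpl; auto).
    split.
    + intro Hall. apply NNPP. intro Hn. destruct (G3 f w z Hf Hn) as [n Hn'].
      apply Hn'. specialize (Hall n). rewrite Spow_Z in Hall. apply IHf; auto.
    + intros Hg n. rewrite Spow_Z. apply IHf; auto. apply G1; auto.
  - assert (S1' : Sg f) by (apply (sub1 (Hist f)); simpl; auto).
    split.
    + intro Hall. apply NNPP. intro Hn. destruct (H3 f w z Hf Hn) as [n Hn'].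
      apply Hn'. specialize (Hall n). rewrite Sinvpow_Z in Hall. apply IHf; auto.
    + intros Hg n. rewrite Sinvpow_Z. apply IHf; auto. apply H1; auto.
  - assert (S1' : Sg f1) by (apply (sub1 (Until f1 f2)); simpl; auto).
    assert (S2' : Sg f2) by (apply (sub1 (Until f1 f2)); simpl; auto).
    split.
    + intros [n [Hb Ha]]. rewrite Spow_Z in Hb. apply (U1 f1 f2 w Hf n); auto.
      * apply IHf2; auto.
      * intros i Hi. specialize (Ha i Hi). rewrite Spow_Z in Ha. apply IHf1; auto.
    + intro Hu. destruct (U3 f1 f2 w z Hf Hu) as [n Hn].
      destruct (U4 f1 f2 w Hf n z Hu Hn) as [n' [Hb Ha]].
      exists n'. split.
      * rewrite Spow_Z. apply IHf2; auto.
      * intros i Hi. rewrite Spow_Z. apply IHf1; auto.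
  - assert (S1' : Sg f1) by (apply (sub1 (Since f1 f2)); simpl; auto).
    assert (S2' : Sg f2) by (apply (sub1 (Since f1 f2)); simpl; auto).
    split.
    + intros [n [Hb Ha]]. rewrite Sinvpow_Z in Hb. apply (S1 f1 f2 w Hf n); auto.
      * apply IHf2; auto.
      * intros i Hi. specialize (Ha i Hi). rewrite Sinvpow_Z in Ha. apply IHf1; auto.
    + intro Hu. destruct (S3 f1 f2 w z Hf Hu) as [n Hn].
      destruct (S4 f1 f2 w Hf n z Hu Hn) as [n' [Hb Ha]].
      exists n'. split.
      * rewrite Sinvpow_Z. apply IHf2; auto.
      * intros i Hi. rewrite Sinvpow_Z. apply IHf1; auto.
Qed.

Lemma model_ok : birelational_model Qc Z Qcle Z.succ Z.pred Vm.
Proof.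
  split; [|split; [|split]].
  - split; [|split; [|split]].
    + apply Qcle_refl.
    + intros x y z; apply Qcle_trans.
    + apply Qcle_antisym.
    + intros x y. destruct (Qclt_le_dec x y); [left; apply Qclt_le_weak|right]; auto.
  - intro t. lia.
  - intro t. lia.
  - intros p w v t Hvw H. unfold Vm in *. destruct (col_valid t) as [_ [V2 _]]. apply (V2 v w Hvw). auto.
Qed.

End Truth.


Lemma op_fd : forall x x' y', le x x' -> Rop x' y' -> exists y, Rop x y /\ le y y'.
Proof. unfold Rop. intros x x' y' H1 H2. destruct (q_bd y' x' x H2 H1) as [u [Hu1 Hu2]]. eauto. Qed.
Lemma op_fu : forall x x' y, le x x' -> Rop x y -> exists y', Rop x' y' /\ le y y'.
Proof. unfold Rop. intros x x' y H1 H2. destruct (q_bu y x x' H2 H1) as [u [Hu1 Hu2]]. eauto. Qed.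
Lemma op_bd : forall x' y' y, Rop x' y' -> le y y' -> exists x, le x x' /\ Rop x y.
Proof. unfold Rop. intros x' y' y H1 H2. destruct (q_fd y y' x' H2 H1) as [u [Hu1 Hu2]]. eauto. Qed.
Lemma op_bu : forall x y y', Rop x y -> le y y' -> exists x', le x x' /\ Rop x' y'.
Proof. unfold Rop. intros x y y' H1 H2. destruct (q_fu y y' x H2 H1) as [u [Hu1 Hu2]]. eauto. Qed.
Lemma op_cvi : forall x y1 y2 y3, Rop x y1 -> Rop x y3 -> le y1 y2 -> le y2 y3 -> Rop x y2.
Proof. unfold Rop. intros x y1 y2 y3 H1 H3 H12 H23. exact (q_cvp x y1 y2 y3 H1 H3 H12 H23). Qed.
Lemma op_ser : forall x, exists y, Rop x y.
Proof. unfold Rop. apply q_serb. Qed.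

Lemma main_exists (phi : formula) (w0 : W) : Sg phi -> ~ l w0 phi ->
  exists (W' : Type) (le' : W' -> W' -> Prop) (V : nat -> W' -> Z -> Prop),
    birelational_model W' Z le' Z.succ Z.pred V /\ falsifies W' Z le' Z.succ Z.pred V phi.
Proof.
  intros Hphi Hw0.
  destruct (init_col W le l sgl q_refl q_trans q_ctr q_lab q_fin w0) as [col0 [Hv0 Hc0]].
  destruct (forward W le l R sgl q_refl q_trans q_ctr q_lab q_fin q_fd q_fu q_bd q_bu q_cvi q_serf
              pendF dnF realF col0 Hv0) as [cf [Hf0 [Hfv [Hfl Hfr]]]].
  destruct (forward W le l Rop sgl q_refl q_trans q_ctr q_lab q_fin
              op_fd op_fu op_bd op_bu op_cvi op_ser pendB dnB realB col0 Hv0) as [cb [Hb0 [Hbv [Hbl Hbr]]]].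
  assert (H0 : cf O = cb O) by congruence.
  exists Qc, Qcle, (Vm cf cb). split.
  - apply model_ok; auto.
  - exists (Q2Qc 0), 0%Z. rewrite (truth cf cb H0 Hfv Hbv Hfl Hbl Hfr Hbr phi Hphi).
    replace (col cf cb 0%Z) with (cf O) by (unfold col; simpl; auto).
    rewrite Hf0, Hc0. auto.
Qed.

End Main.



End M5.

Theorem proposition5p3 (Sg : fset) (W : Type) (le : W -> W -> Prop)
  (l : W -> fset) (R : W -> W -> Prop) (phi : formula) :
  finite_fset Sg -> subformula_closed Sg ->
  quasimodel Sg W le l R ->
  Sg phi -> (exists w, ~ l w phi) ->
  exists (W' : Type) (le' : W' -> W' -> Prop) (V : nat -> W' -> Z -> Prop),
    birelational_model W' Z le' Z.succ Z.pred V /\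
    falsifies W' Z le' Z.succ Z.pred V phi.
Proof.
  intros [sgl Hsgl] Hsub HQ Hphi [w0 Hw0].
  exact (M5.main_exists Sg W le l R sgl Hsgl Hsub HQ phi w0 Hphi Hw0).
Qed.
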